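(* Let $K_i(v)=K_{0i}e^{-v^2/(2\sigma_{K_i}^2)}$ ($i=1,2$) and $a(v_1,v_2)=a_0e^{-(v_1-v_2)^2/(2\sigma_a^2)}$ with all constants positive, and consider $$\begin{aligned}\dot x_1&=x_1\Big[r_1\Big(1-\frac{x_1}{K_1(u_1)}\Big)-\frac{a(u_1,u_2)x_2}{1+ha(u_1,u_2)x_1}\Big],\\ \dot x_2&=x_2\Big[\frac{ea(u_1,u_2)x_1}{1+ha(u_1,u_2)x_1}-d+r_2\Big(1-\frac{x_2}{K_2(u_2)}\Big)\Big],\\ \dot u_1&=\sigma_1^2\Big[-\frac{r_1x_1u_1}{\sigma_{K_1}^2K_1(u_1)}+\frac{(u_1-u_2)x_2a(u_1,u_2)}{\sigma_a^2(1+ha(u_1,u_2)x_1)^2}\Big],\\ \dot u_2&=\sigma_2^2\Big[-\frac{r_2x_2u_2}{\sigma_{K_2}^2K_2(u_2)}+\frac{e(u_1-u_2)x_1a(u_1,u_2)}{\sigma_a^2(1+ha(u_1,u_2)x_1)^2}\Big],\end{aligned}$$ with $r_1,r_2,h,e,\sigma_1,\sigma_2>0$, $d\ge0$. (i) If $r_2+\frac{ea_0K_{01}}{1+a_0hK_{01}}<d$, then the strategy $(0,0)$ of the boundary equilibrium $(K_{01},0,0,0)$ is the unique ESS of the system. (ii) Assume $\sigma_{K_2}>\sigma_{K_1}$, and let $(x_1^*,x_2^*,0,0)$ with $x_1^*,x_2^*>0$ be an equilibrium of the system. If $K_{02}a_0<\frac{r_1}{1-\frac{d}{r_2}}$, $K_{01}a_0<\frac{1}{h}$,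 $\min\{\frac{2r_2}{K_{02}},\frac{r_1}{\sigma_{K_1}^2K_{01}}\}>a_0$, $\frac{r_1r_2}{K_{01}K_{02}}+\frac{ea_0^2}{(1+a_0hK_{01})^3}>a_0^2hK_{02}(r_2+\frac{e}{h})$, $\frac{\sigma_{K_2}}{\sigma_{K_1}}\sqrt{\frac{r_1eK_{02}}{r_2K_{01}}}>\frac{x_2^*}{x_1^*}$ and $\frac{\sigma_a^2}{\sigma_{K_1}\sigma_{K_2}}>\sqrt{\frac{eK_{01}K_{02}}{r_1r_2}}\,a_0$, then the strategy $(0,0)$ of $(x_1^*,x_2^*,0,0)$ is the unique ESS of the system.
   Context: Fitness functions: $G_1(v_1,u,x)=r_1(1-\frac{x_1}{K_1(v_1)})-\frac{a(v_1,u_2)x_2}{1+ha(v_1,u_2)x_1}$ and $G_2(v_2,u,x)=\frac{ea(u_1,v_2)x_1}{1+ha(u_1,v_2)x_1}-d+r_2(1-\frac{x_2}{K_2(v_2)})$. For an equilibrium $(x^*,u^* )$ of the system, $u^*$ is an evolutionary stable strategy (ESS) if $(x^*,u^* )$ is locally asymptotically stable for the four-dimensional system and, for $i=1,2$, $\max_{v_i\in\mathbb R}G_i(v_i,u^*,x^* )=G_i(u_i^*,u^*,x^* )=0$ when $x_1^*,x_2^*>0$, respectively $\max_{v_i\in\mathbb R}G_i(v_i,u^*,x^* )=G_i(u_i^*,u^*,x^* )\le0$ when $x_1^*x_2^*=0$. ''Unique ESS'' means that it is an ESS and no other equilibrium of the system has an ESS strategy. *)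

(* Defs.v *)
From Stdlib Require Import Reals Lra.
Open Scope R_scope.

Record params := mkParams {
  K01 : R; K02 : R; sK1 : R; sK2 : R; a0 : R; sa : R;
  r1 : R; r2 : R; h : R; e : R; d : R; s1 : R; s2 : R }.

Record state := mkState { sx1 : R; sx2 : R; su1 : R; su2 : R }.

Definition K1 (p : params) (v : R) : R := K01 p * exp (- (v ^ 2) / (2 * sK1 p ^ 2)).
Definition K2 (p : params) (v : R) : R := K02 p * exp (- (v ^ 2) / (2 * sK2 p ^ 2)).
Definition aa (p : params) (v1 v2 : R) : R :=
  a0 p * exp (- ((v1 - v2) ^ 2) / (2 * sa p ^ 2)).

Definition G1 (p : params) (v1 : R) (s : state) : R :=
  r1 p * (1 - sx1 s / K1 p v1)
  - aa p v1 (su2 s) * sx2 s / (1 + h p * aa p v1 (su2 s) * sx1 s).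
Definition G2 (p : params) (v2 : R) (s : state) : R :=
  e p * aa p (su1 s) v2 * sx1 s / (1 + h p * aa p (su1 s) v2 * sx1 s)
  - d p + r2 p * (1 - sx2 s / K2 p v2).

Definition F (p : params) (s : state) : state :=
  let x1 := sx1 s in let x2 := sx2 s in let u1 := su1 s in let u2 := su2 s in
  let A := aa p u1 u2 in
  mkState
    (x1 * (r1 p * (1 - x1 / K1 p u1) - A * x2 / (1 + h p * A * x1)))
    (x2 * (e p * A * x1 / (1 + h p * A * x1) - d p + r2 p * (1 - x2 / K2 p u2)))
    (s1 p ^ 2 * (- (r1 p * x1 * u1) / (sK1 p ^ 2 * K1 p u1)
                 + (u1 - u2) * x2 * A / (sa p ^ 2 * (1 + h p * A * x1) ^ 2)))
    (s2 p ^ 2 * (- (r2 p * x2 * u2) / (sK2 p ^ 2 * K2 p u2)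
                 + e p * (u1 - u2) * x1 * A / (sa p ^ 2 * (1 + h p * A * x1) ^ 2))).

Definition dist4 (s t : state) : R :=
  sqrt ((sx1 s - sx1 t) ^ 2 + (sx2 s - sx2 t) ^ 2
        + (su1 s - su1 t) ^ 2 + (su2 s - su2 t) ^ 2).

Definition equilibrium (p : params) (s : state) : Prop :=
  F p s = mkState 0 0 0 0.

Definition sol_on (p : params) (T : R) (phi : R -> state) : Prop :=
  0 < T /\
  (forall t, 0 < t < T ->
     derivable_pt_lim (fun s => sx1 (phi s)) t (sx1 (F p (phi t))) /\
     derivable_pt_lim (fun s => sx2 (phi s)) t (sx2 (F p (phi t))) /\
     derivable_pt_lim (fun s => su1 (phi s)) t (su1 (F p (phi t))) /\
     derivable_pt_lim (fun s => su2 (phi s)) t (su2 (F p (phi t)))) /\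
  (forall eps, 0 < eps -> exists del, 0 < del /\
     forall t, 0 <= t < del -> dist4 (phi t) (phi 0) < eps).

Definition loc_asym_stable (p : params) (s : state) : Prop :=
  (forall eps, 0 < eps -> exists del, 0 < del /\
     forall T phi, sol_on p T phi -> dist4 (phi 0) s < del ->
       forall t, 0 <= t < T -> dist4 (phi t) s < eps) /\
  (exists del, 0 < del /\
     forall phi, (forall T, 0 < T -> sol_on p T phi) -> dist4 (phi 0) s < del ->
       forall eps, 0 < eps -> exists T0, forall t, T0 <= t -> dist4 (phi t) s < eps).

Definition isESS (p : params) (s : state) : Prop :=
  0 <= sx1 s /\ 0 <= sx2 s /\
  equilibrium p s /\ loc_asym_stable p s /\
  (0 < sx1 s /\ 0 < sx2 s ->
     ((forall v, G1 p v s <= G1 p (su1 s) s) /\ G1 p (su1 s) s = 0) /\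
     ((forall v, G2 p v s <= G2 p (su2 s) s) /\ G2 p (su2 s) s = 0)) /\
  (sx1 s * sx2 s = 0 ->
     ((forall v, G1 p v s <= G1 p (su1 s) s) /\ G1 p (su1 s) s <= 0) /\
     ((forall v, G2 p v s <= G2 p (su2 s) s) /\ G2 p (su2 s) s <= 0)).

Definition unique_ESS (p : params) (s : state) : Prop :=
  isESS p s /\ forall s', isESS p s' -> s' = s.

(* Main.v *)
Require Import Defs.
From Stdlib Require Import Reals Lra Psatz.
Open Scope R_scope.

Definition SS (z c : state) : R :=
  (sx1 z - sx1 c) ^ 2 + (sx2 z - sx2 c) ^ 2 + (su1 z - su1 c) ^ 2 + (su2 z - su2 c) ^ 2.

Lemma SS_ge0 z c : 0 <= SS z c.
Proof. unfold SS. pose proof (pow2_ge_0 (sx1 z - sx1 c)). pose proof (pow2_ge_0 (sx2 z - sx2 c)).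
  pose proof (pow2_ge_0 (su1 z - su1 c)). pose proof (pow2_ge_0 (su2 z - su2 c)). lra. Qed.

Lemma dist4_SS z c : dist4 z c = sqrt (SS z c).
Proof. reflexivity. Qed.

Lemma dist4_ge0 z c : 0 <= dist4 z c.
Proof. apply sqrt_pos. Qed.

Lemma dist4_sq z c : dist4 z c ^ 2 = SS z c.
Proof. rewrite dist4_SS. simpl. rewrite Rmult_1_r. apply sqrt_sqrt, SS_ge0. Qed.

Lemma abs_le_sqrt (a s : R) : a ^ 2 <= s -> Rabs a <= sqrt s.
Proof.
  intro H. rewrite <- sqrt_Rsqr_abs. apply sqrt_le_1_alt. unfold Rsqr. simpl in H. lra.
Qed.

Lemma c1_le z c : Rabs (sx1 z - sx1 c) <= dist4 z c.
Proof. apply abs_le_sqrt. unfold SS. pose proof (pow2_ge_0 (sx1 z - sx1 c)). pose proof (pow2_ge_0 (sx2 z - sx2 c)).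
  pose proof (pow2_ge_0 (su1 z - su1 c)). pose proof (pow2_ge_0 (su2 z - su2 c)). lra. Qed.
Lemma c2_le z c : Rabs (sx2 z - sx2 c) <= dist4 z c.
Proof. apply abs_le_sqrt. unfold SS. pose proof (pow2_ge_0 (sx1 z - sx1 c)). pose proof (pow2_ge_0 (sx2 z - sx2 c)).
  pose proof (pow2_ge_0 (su1 z - su1 c)). pose proof (pow2_ge_0 (su2 z - su2 c)). lra. Qed.
Lemma c3_le z c : Rabs (su1 z - su1 c) <= dist4 z c.
Proof. apply abs_le_sqrt. unfold SS. pose proof (pow2_ge_0 (sx1 z - sx1 c)). pose proof (pow2_ge_0 (sx2 z - sx2 c)).
  pose proof (pow2_ge_0 (su1 z - su1 c)). pose proof (pow2_ge_0 (su2 z - su2 c)). lra. Qed.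
Lemma c4_le z c : Rabs (su2 z - su2 c) <= dist4 z c.
Proof. apply abs_le_sqrt. unfold SS. pose proof (pow2_ge_0 (sx1 z - sx1 c)). pose proof (pow2_ge_0 (sx2 z - sx2 c)).
  pose proof (pow2_ge_0 (su1 z - su1 c)). pose proof (pow2_ge_0 (su2 z - su2 c)). lra. Qed.

Definition near (c : state) (P : state -> Prop) : Prop :=
  exists r, 0 < r /\ forall z, dist4 z c < r -> P z.

Lemma near_and c P Q : near c P -> near c Q -> near c (fun z => P z /\ Q z).
Proof.
  intros [r1 [H1 P1]] [r2 [H2 P2]]. exists (Rmin r1 r2). split.
  - apply Rmin_glb_lt; auto.
  - intros z Hz. split; [apply P1|apply P2]; eapply Rlt_le_trans; eauto;
      [apply Rmin_l|apply Rmin_r].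
Qed.

Lemma near_mono c (P Q : state -> Prop) : (forall z, P z -> Q z) -> near c P -> near c Q.
Proof. intros H [r [Hr P1]]. exists r. split; auto. Qed.

Lemma near_dist c r : 0 < r -> near c (fun z => dist4 z c < r).
Proof. intros; exists r; auto. Qed.

Ltac nmono H := eapply near_mono; [|exact H]; cbv beta; intros ?z ?Hz.

Definition bigO (c : state) (k : nat) (f : state -> R) : Prop :=
  exists M, near c (fun z => Rabs (f z) <= M * dist4 z c ^ k).

Lemma bigO_ext c k f g : near c (fun z => f z = g z) -> bigO c k g -> bigO c k f.
Proof.
  intros Hn [M HM]. exists M. nmono (near_and c _ _ Hn HM). rename Hz into H.
  destruct H as [E H]. rewrite E. exact H.
Qed.

Lemma bigO_ext_all c k f g : (forall z, f z = g z) -> bigO c k g -> bigO c k f.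
Proof. intros H; apply bigO_ext. exists 1; split; [lra|auto]. Qed.

Lemma bigO_Mpos c k f : bigO c k f -> exists M, 0 < M /\ near c (fun z => Rabs (f z) <= M * dist4 z c ^ k).
Proof.
  intros [M HM]. exists (Rabs M + 1). split. { pose proof (Rabs_pos M); lra. }
  nmono HM. rename Hz into H.
  pose proof (pow_le _ k (dist4_ge0 z c)). pose proof (Rle_abs M). nra.
Qed.

Lemma bigO_plus c k f g : bigO c k f -> bigO c k g -> bigO c k (fun z => f z + g z).
Proof.
  intros [M1 H1] [M2 H2]. exists (M1 + M2).
  nmono (near_and c _ _ H1 H2). rename Hz into H.
  destruct H. eapply Rle_trans. apply Rabs_triang. lra.
Qed.

Lemma bigO_opp c k f : bigO c k f -> bigO c k (fun z => - f z).
Proof.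
  intros [M1 H1]. exists M1. nmono H1. rename Hz into H.
  rewrite Rabs_Ropp. exact H.
Qed.

Lemma bigO_minus c k f g : bigO c k f -> bigO c k g -> bigO c k (fun z => f z - g z).
Proof. intros. unfold Rminus. apply bigO_plus; auto. apply bigO_opp; auto. Qed.

Lemma bigO_mult c j k f g : bigO c j f -> bigO c k g -> bigO c (j + k) (fun z => f z * g z).
Proof.
  intros H1 H2. destruct (bigO_Mpos _ _ _ H1) as [M1 [HM1 N1]].
  destruct (bigO_Mpos _ _ _ H2) as [M2 [HM2 N2]]. exists (M1 * M2).
  nmono (near_and c _ _ N1 N2). rename Hz into H.
  destruct H as [A B]. rewrite Rabs_mult, pow_add.
  pose proof (pow_le _ j (dist4_ge0 z c)). pose proof (pow_le _ k (dist4_ge0 z c)).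
  pose proof (Rabs_pos (f z)). pose proof (Rabs_pos (g z)).
  replace (M1 * M2 * (dist4 z c ^ j * dist4 z c ^ k)) with ((M1 * dist4 z c ^ j) * (M2 * dist4 z c ^ k)) by ring.
  apply Rmult_le_compat; auto.
Qed.

Lemma bigO_weak c k f : bigO c (S k) f -> bigO c k f.
Proof.
  intros H. destruct (bigO_Mpos _ _ _ H) as [M [HM N]]. exists M.
  nmono (near_and c _ _ N (near_dist c 1 Rlt_0_1)). rename Hz into HH.
  destruct HH as [A B]. simpl in A.
  pose proof (pow_le _ k (dist4_ge0 z c)). pose proof (dist4_ge0 z c).
  assert (dist4 z c * dist4 z c ^ k <= dist4 z c ^ k) by nra. nra.
Qed.

Lemma bigO_const c a : bigO c 0 (fun _ => a).
Proof. exists (Rabs a). exists 1. split; [lra|]. intros; simpl; lra. Qed.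

Lemma bigO_y1 c : bigO c 1 (fun z => sx1 z - sx1 c).
Proof. exists 1; exists 1; split; [lra|]. intros; simpl. rewrite !Rmult_1_r, Rmult_1_l. apply c1_le. Qed.
Lemma bigO_y2 c : bigO c 1 (fun z => sx2 z - sx2 c).
Proof. exists 1; exists 1; split; [lra|]. intros; simpl. rewrite !Rmult_1_r, Rmult_1_l. apply c2_le. Qed.
Lemma bigO_y3 c : bigO c 1 (fun z => su1 z - su1 c).
Proof. exists 1; exists 1; split; [lra|]. intros; simpl. rewrite !Rmult_1_r, Rmult_1_l. apply c3_le. Qed.
Lemma bigO_y4 c : bigO c 1 (fun z => su2 z - su2 c).
Proof. exists 1; exists 1; split; [lra|]. intros; simpl. rewrite !Rmult_1_r, Rmult_1_l. apply c4_le. Qed.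

Lemma pow_le1 x k : 0 <= x <= 1 -> x ^ k <= 1.
Proof. intros H. rewrite <- (pow1 k). apply pow_incr. lra. Qed.

Lemma bigO_near_small c k f e : bigO c (S k) f -> 0 < e -> near c (fun z => Rabs (f z) <= e).
Proof.
  intros H He. destruct (bigO_Mpos _ _ _ H) as [M [HM N]].
  set (r := Rmin 1 (e / M)).
  assert (Hr : 0 < r) by (apply Rmin_glb_lt; [lra| apply Rdiv_lt_0_compat; lra]).
  nmono (near_and c _ _ N (near_dist c r Hr)). rename Hz into HH.
  destruct HH as [A B]. simpl in A.
  pose proof (pow_le _ k (dist4_ge0 z c)). pose proof (dist4_ge0 z c).
  assert (dist4 z c < 1) by (eapply Rlt_le_trans; [exact B| apply Rmin_l]).
  assert (dist4 z c < e / M) by (eapply Rlt_le_trans; [exact B| apply Rmin_r]).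
  assert (dist4 z c ^ k <= 1) by (apply pow_le1; lra).
  assert (M * dist4 z c < e) by (apply (Rmult_lt_compat_l M) in H3; [|lra]; field_simplify in H3; lra).
  nra.
Qed.

Lemma Rabs_le_inv a b : Rabs a <= b -> - b <= a <= b.
Proof. intros H. pose proof (Rle_abs a). pose proof (Rle_abs (-a)). rewrite Rabs_Ropp in H1. lra. Qed.
Lemma Rabs_le2 a b : - b <= a <= b -> Rabs a <= b.
Proof. intros H. unfold Rabs. destruct (Rcase_abs a); lra. Qed.

Lemma bigO_weak0 c k f : bigO c k f -> bigO c 0 f.
Proof. induction k; intros H; auto. apply IHk, bigO_weak, H. Qed.

Lemma exp_near1 t : Rabs t <= 1/2 -> Rabs (exp t - 1) <= 2 * Rabs t.
Proof.
  intros H. pose proof (exp_ineq1_le t). pose proof (exp_ineq1_le (-t)).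
  rewrite exp_Ropp in H1. pose proof (exp_pos t).
  assert (Ht : - (1/2) <= t <= 1/2) by (apply Rabs_le_inv in H; lra).
  assert (E : exp t * (1 - t) <= 1).
  { assert (1 - t <= / exp t) by lra.
    apply (Rmult_le_compat_l (exp t)) in H3; [|lra].
    rewrite Rinv_r in H3; lra. }
  apply Rabs_le2. destruct (Rle_dec 0 t).
  - rewrite Rabs_right by lra. split; [lra|]. nra.
  - rewrite Rabs_left by lra. split; [lra|]. nra.
Qed.

Lemma bigO_exp c k f : bigO c (S k) f -> bigO c (S k) (fun z => exp (f z) - 1).
Proof.
  intros H. destruct H as [M HM]. exists (2 * M).
  nmono (near_and c _ _ HM (bigO_near_small c k f (1/2) (ex_intro _ M HM) ltac:(lra))).
  destruct Hz as [A B]. eapply Rle_trans. apply exp_near1; auto. lra.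
Qed.

Lemma bigO_exp0 c k f : bigO c (S k) f -> bigO c 0 (fun z => exp (f z)).
Proof.
  intros H. apply bigO_ext_all with (g := fun z => (exp (f z) - 1) + 1).
  { intros; ring. }
  apply bigO_plus. - apply (bigO_weak0 c (S k)). apply bigO_exp; auto. - apply bigO_const.
Qed.

Lemma bigO_inv_all c g g0 : bigO c 1 (fun z => g z - g0) -> 0 < g0 ->
  near c (fun z => g0 / 2 < g z) /\ bigO c 0 (fun z => / g z) /\ bigO c 1 (fun z => / g z - / g0).
Proof.
  intros H Hg.
  assert (N : near c (fun z => g0 / 2 < g z)).
  { eapply near_mono; [|exact (bigO_near_small c 0 _ (g0/4) H ltac:(lra))].
    cbv beta. intros z Hz. apply Rabs_le_inv in Hz. lra. }
  split; [exact N|]. split.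
  - exists (2 / g0). nmono N. simpl. rewrite Rmult_1_r.
    rewrite Rabs_right by (apply Rle_ge, Rlt_le, Rinv_0_lt_compat; lra).
    apply Rmult_le_reg_l with (g z); [lra|]. rewrite Rinv_r by lra.
    apply Rmult_le_reg_l with g0; [lra|]. field_simplify; lra.
  - destruct H as [M HM]. exists (2 / (g0 * g0) * M).
    nmono (near_and c _ _ N HM). destruct Hz as [A B].
    replace (/ g z - / g0) with ((g z - g0) * (- / (g z * g0))) by (field; lra).
    rewrite Rabs_mult, Rabs_Ropp, (Rabs_right (/ (g z * g0))) by (apply Rle_ge, Rlt_le, Rinv_0_lt_compat; nra).
    assert (/ (g z * g0) <= 2 / (g0 * g0)).
    { apply Rmult_le_reg_l with (g z * g0); [nra|]. rewrite Rinv_r by nra.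
      apply Rmult_le_reg_l with (g0); [lra|]. field_simplify; nra. }
    pose proof (Rabs_pos (g z - g0)). pose proof (Rinv_0_lt_compat (g z * g0) ltac:(nra)).
    assert (0 <= 2 / (g0 * g0)) by (apply Rlt_le, Rdiv_lt_0_compat; nra).
    apply Rle_trans with (M * dist4 z c ^ 1 * (2 / (g0 * g0))).
    + apply Rmult_le_compat; lra.
    + lra.
Qed.

Lemma dl_ext f g x l : (forall s, f s = g s) -> derivable_pt_lim f x l -> derivable_pt_lim g x l.
Proof.
  intros E H eps He. destruct (H eps He) as [d Hd]. exists d. intros h h0 hd.
  rewrite <- !E. auto.
Qed.
Lemma dl_eq f x l l' : l = l' -> derivable_pt_lim f x l -> derivable_pt_lim f x l'.
Proof. intros ->; auto. Qed.
Lemma dl_plus f g x a b : derivable_pt_lim f x a -> derivable_pt_lim g x b ->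
  derivable_pt_lim (fun s => f s + g s) x (a + b).
Proof. intros; apply (derivable_pt_lim_plus f g); auto. Qed.
Lemma dl_mult f g x a b : derivable_pt_lim f x a -> derivable_pt_lim g x b ->
  derivable_pt_lim (fun s => f s * g s) x (a * g x + f x * b).
Proof. intros; apply (derivable_pt_lim_mult f g); auto. Qed.
Lemma dl_const a x : derivable_pt_lim (fun _ => a) x 0.
Proof. apply derivable_pt_lim_const. Qed.

Lemma dl_sq (f : R -> R) c pw t l : derivable_pt_lim f t l ->
  derivable_pt_lim (fun s => pw * (f s - c) ^ 2) t (2 * pw * (f t - c) * l).
Proof.
  intros H.
  apply dl_ext with (f := fun s => pw * ((f s + - c) * (f s + - c))). { intros; ring. }
  eapply dl_eq; [|apply dl_mult; [apply dl_const| apply dl_mult; apply dl_plus; [exact H|apply dl_const|exact H|apply dl_const]]].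
  cbv beta; ring.
Qed.

Lemma dl_psi (f : R -> R) t l : 0 < t -> derivable_pt_lim f t l ->
  derivable_pt_lim (fun s => f (Rmax s 0)) t l.
Proof.
  intros Ht H eps He. destruct (H eps He) as [d Hd].
  assert (P : 0 < Rmin d t) by (apply Rmin_glb_lt; [apply cond_pos|lra]).
  exists (mkposreal _ P). intros h h0 hd. simpl in hd.
  assert (Rabs h < t) by (eapply Rlt_le_trans; [exact hd|apply Rmin_r]).
  assert (Rabs h < d) by (eapply Rlt_le_trans; [exact hd|apply Rmin_l]).
  pose proof (Rle_abs (-h)). rewrite Rabs_Ropp in H2.
  rewrite (Rmax_left (t + h)) by lra.
  rewrite (Rmax_left t) by lra. apply Hd; auto.
Qed.

Lemma dist_lt_SS z c e : 0 < e -> dist4 z c < e -> SS z c < e ^ 2.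
Proof.
  intros He H. rewrite <- dist4_sq. pose proof (dist4_ge0 z c). simpl. nra.
Qed.
Lemma SS_lt_dist z c e : 0 < e -> SS z c < e ^ 2 -> dist4 z c < e.
Proof.
  intros He H. rewrite dist4_SS. rewrite <- (sqrt_pow2 e) by lra. apply sqrt_lt_1_alt.
  split; [apply SS_ge0|exact H].
Qed.

Definition Vw (c : state) (w1 w2 w3 w4 : R) (z : state) : R :=
  w1 * (sx1 z - sx1 c) ^ 2 + w2 * (sx2 z - sx2 c) ^ 2
  + w3 * (su1 z - su1 c) ^ 2 + w4 * (su2 z - su2 c) ^ 2.
Definition Ww (p : params) (c : state) (w1 w2 w3 w4 : R) (z : state) : R :=
  2 * w1 * (sx1 z - sx1 c) * sx1 (F p z) + 2 * w2 * (sx2 z - sx2 c) * sx2 (F p z)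
  + 2 * w3 * (su1 z - su1 c) * su1 (F p z) + 2 * w4 * (su2 z - su2 c) * su2 (F p z).

Lemma V_deriv p T phi c w1 w2 w3 w4 t : sol_on p T phi -> 0 < t < T ->
  derivable_pt_lim (fun s => Vw c w1 w2 w3 w4 (phi (Rmax s 0))) t (Ww p c w1 w2 w3 w4 (phi t)).
Proof.
  intros [HT [HD _]] Ht. destruct (HD t Ht) as [D1 [D2 [D3 D4]]].
  apply (dl_psi _ _ _ (proj1 Ht)) in D1, D2, D3, D4.
  apply (dl_sq _ (sx1 c) w1) in D1. apply (dl_sq _ (sx2 c) w2) in D2.
  apply (dl_sq _ (su1 c) w3) in D3. apply (dl_sq _ (su2 c) w4) in D4.
  unfold Vw, Ww. cbv beta in *.
  rewrite (Rmax_left t 0) in D1, D2, D3, D4 by lra.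
  eapply dl_eq; [|apply dl_plus; [apply dl_plus; [apply dl_plus; [exact D1|exact D2]|exact D3]|exact D4]].
  ring.
Qed.

Lemma cp_ext f g x : (forall s, f s = g s) -> continuity_pt f x -> continuity_pt g x.
Proof.
  intros E H eps He. destruct (H eps He) as [d [Hd Hd2]]. exists d. split; auto.
  intros y Hy. rewrite <- !E. auto.
Qed.
Lemma cp_plus f g x : continuity_pt f x -> continuity_pt g x -> continuity_pt (fun s => f s + g s) x.
Proof. intros; apply (continuity_pt_plus f g); auto. Qed.
Lemma cp_mult f g x : continuity_pt f x -> continuity_pt g x -> continuity_pt (fun s => f s * g s) x.
Proof. intros; apply (continuity_pt_mult f g); auto. Qed.
Lemma cp_const a x : continuity_pt (fun _ => a) x.
Proof. apply continuity_pt_const. intros ? ?; auto. Qed.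
Lemma cp_sq f c pw x : continuity_pt f x -> continuity_pt (fun s => pw * (f s - c) ^ 2) x.
Proof.
  intros H. apply cp_ext with (f := fun s => pw * ((f s + - c) * (f s + - c))). { intros; ring. }
  apply cp_mult; [apply cp_const|]. apply cp_mult; apply cp_plus; auto; apply cp_const.
Qed.

Lemma cp_comp0 (g : state -> R) T phi p :
  sol_on p T phi -> (forall z w, Rabs (g z - g w) <= dist4 z w) ->
  continuity_pt (fun s => g (phi (Rmax s 0))) 0.
Proof.
  intros [HT [_ HC]] Hg eps He. destruct (HC eps He) as [d [Hd Hd2]].
  exists d. split; [lra|]. intros x [_ Hx]. simpl in Hx. unfold R_dist in Hx. simpl. unfold R_dist.
  rewrite (Rmax_left 0 0) by lra. eapply Rle_lt_trans; [apply Hg|]. apply Hd2.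
  split. apply Rmax_r. unfold Rmax. destruct (Rle_dec x 0); [lra|].
  rewrite Rminus_0_r in Hx. pose proof (Rle_abs x). lra.
Qed.

Lemma V_cont0 p T phi c w1 w2 w3 w4 : sol_on p T phi ->
  continuity_pt (fun s => Vw c w1 w2 w3 w4 (phi (Rmax s 0))) 0.
Proof.
  intros H. unfold Vw.
  repeat apply cp_plus; apply cp_sq; eapply cp_comp0; eauto; intros z w.
  - pose proof (c1_le z w); auto.
  - pose proof (c2_le z w); auto.
  - pose proof (c3_le z w); auto.
  - pose proof (c4_le z w); auto.
Qed.

Lemma V_cont p T phi c w1 w2 w3 w4 t : sol_on p T phi -> 0 <= t < T ->
  continuity_pt (fun s => Vw c w1 w2 w3 w4 (phi (Rmax s 0))) t.
Proof.
  intros H Ht. destruct (Req_dec t 0) as [->|Hn]. { eapply V_cont0; eauto. }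
  apply derivable_continuous_pt. exists (Ww p c w1 w2 w3 w4 (phi t)).
  apply (V_deriv p T); auto. lra.
Qed.

Lemma decr (f df : R -> R) a b : a <= b ->
  (forall x, a < x < b -> derivable_pt_lim f x (df x)) ->
  (forall x, a <= x <= b -> continuity_pt f x) ->
  (forall x, a < x < b -> df x <= 0) -> f b <= f a.
Proof.
  intros Hab HD HC Hneg. destruct (Req_dec a b) as [->|Hn]; [lra|].
  assert (pr1 : forall c, a < c < b -> derivable_pt f c).
  { intros c Hc. exists (df c). apply HD; auto. }
  assert (pr2 : forall c, a < c < b -> derivable_pt id c).
  { intros c Hc. apply derivable_pt_id. }
  destruct (MVT f id a b pr1 pr2 ltac:(lra) HC) as [c [P E]].
  { intros c Hc. apply derivable_continuous_pt, derivable_pt_id. }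
  rewrite (derive_pt_eq_0 f c (df c) (pr1 c P) (HD c P)) in E.
  rewrite (derive_pt_eq_0 id c 1 (pr2 c P)) in E.
  2:{ apply derivable_pt_lim_id. }
  unfold id in E. assert (df c <= 0) by auto. nra.
Qed.

Lemma V_bounds c w1 w2 w3 w4 z : 0 < w1 -> 0 < w2 -> 0 < w3 -> 0 < w4 ->
  Rmin (Rmin w1 w2) (Rmin w3 w4) * SS z c <= Vw c w1 w2 w3 w4 z <= (w1 + w2 + w3 + w4) * SS z c.
Proof.
  intros. unfold Vw, SS.
  set (wl := Rmin (Rmin w1 w2) (Rmin w3 w4)).
  assert (wl <= w1) by (unfold wl; eapply Rle_trans; apply Rmin_l).
  assert (wl <= w2) by (unfold wl; eapply Rle_trans; [apply Rmin_l|apply Rmin_r]).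
  assert (wl <= w3) by (unfold wl; eapply Rle_trans; [apply Rmin_r|apply Rmin_l]).
  assert (wl <= w4) by (unfold wl; eapply Rle_trans; [apply Rmin_r|apply Rmin_r]).
  pose proof (pow2_ge_0 (sx1 z - sx1 c)). pose proof (pow2_ge_0 (sx2 z - sx2 c)).
  pose proof (pow2_ge_0 (su1 z - su1 c)). pose proof (pow2_ge_0 (su2 z - su2 c)).
  split; nra.
Qed.

Lemma SS_V1 c z : SS z c = Vw c 1 1 1 1 z.
Proof. unfold SS, Vw. ring. Qed.

Lemma wl_pos w1 w2 w3 w4 : 0 < w1 -> 0 < w2 -> 0 < w3 -> 0 < w4 -> 0 < Rmin (Rmin w1 w2) (Rmin w3 w4).
Proof. intros. repeat apply Rmin_glb_lt; auto. Qed.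
Lemma wl_le w1 w2 w3 w4 : 0 < w1 -> 0 < w2 -> 0 < w3 -> 0 < w4 -> Rmin (Rmin w1 w2) (Rmin w3 w4) <= w1 + w2 + w3 + w4.
Proof. intros. assert (Rmin (Rmin w1 w2) (Rmin w3 w4) <= w1) by (eapply Rle_trans; apply Rmin_l). lra. Qed.

Lemma stab_core p c w1 w2 w3 w4 r k :
  0 < w1 -> 0 < w2 -> 0 < w3 -> 0 < w4 -> 0 < r -> 0 < k ->
  (forall z, dist4 z c < r -> Ww p c w1 w2 w3 w4 z <= - k * SS z c) ->
  forall e1 T phi, 0 < e1 <= r -> sol_on p T phi ->
  dist4 (phi 0) c < e1 / 2 * (Rmin (Rmin w1 w2) (Rmin w3 w4) / (w1 + w2 + w3 + w4)) ->
  forall t, 0 <= t < T -> dist4 (phi t) c < e1.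
Proof.
  intros H1 H2 H3 H4 Hr Hk HW e1 T phi He1 Hsol H0 t1 Ht1.
  set (wl := Rmin (Rmin w1 w2) (Rmin w3 w4)) in *. set (wm := w1 + w2 + w3 + w4) in *.
  assert (Hwl : 0 < wl) by (apply wl_pos; auto).
  assert (Hwlm : wl <= wm) by (apply wl_le; auto).
  assert (Hwm : 0 < wm) by lra.
  assert (Hq : 0 < wl / wm <= 1).
  { split. apply Rdiv_lt_0_compat; lra. apply Rmult_le_reg_l with wm; [lra|]. field_simplify; lra. }
  assert (D0 : dist4 (phi 0) c < e1 / 2) by nra.
  destruct (Rlt_dec (dist4 (phi t1) c) e1) as [|Hge]; [assumption|exfalso].
  apply Rnot_lt_le in Hge.
  set (E := fun s => 0 <= s <= t1 /\ forall u, 0 <= u <= s -> dist4 (phi u) c < e1).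
  assert (E0 : E 0).
  { split; [lra|]. intros u Hu. replace u with 0 by lra. lra. }
  assert (EB : bound E). { exists t1. intros s [Hs _]. lra. }
  destruct (completeness E EB (ex_intro _ 0 E0)) as [tau [Hub Hlub]].
  assert (Ht0 : 0 <= tau) by (apply Hub; auto).
  assert (Htt : tau <= t1) by (apply Hlub; intros s [Hs _]; lra).
  assert (CA : forall u, 0 <= u < tau -> dist4 (phi u) c < e1).
  { intros u Hu. destruct (Rlt_dec (dist4 (phi u) c) e1) as [|Hn]; auto. exfalso.
    assert (tau <= u); [|lra]. apply Hlub. intros s [Hs Hs2].
    destruct (Rle_dec u s) as [Hle|Hle]; [|lra]. exfalso. apply Hn. apply Hs2. lra. }
  assert (CB : Vw c w1 w2 w3 w4 (phi tau) <= Vw c w1 w2 w3 w4 (phi 0)).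
  { pose proof (decr (fun s => Vw c w1 w2 w3 w4 (phi (Rmax s 0)))
                     (fun s => Ww p c w1 w2 w3 w4 (phi s)) 0 tau Ht0) as D.
    cbv beta in D. rewrite (Rmax_left tau 0), (Rmax_left 0 0) in D by lra. apply D.
    - intros x Hx. apply (V_deriv p T); auto. lra.
    - intros x Hx. apply (V_cont p T); auto. lra.
    - intros x Hx. eapply Rle_trans; [apply HW|].
      + eapply Rlt_le_trans; [apply CA; lra|lra].
      + pose proof (SS_ge0 (phi x) c). nra. }
  assert (CB2 : SS (phi tau) c < (e1 / 2) ^ 2).
  { pose proof (V_bounds c w1 w2 w3 w4 (phi tau) H1 H2 H3 H4) as [B1 _].
    pose proof (V_bounds c w1 w2 w3 w4 (phi 0) H1 H2 H3 H4) as [_ B2].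
    fold wl wm in B1, B2.
    pose proof (dist_lt_SS (phi 0) c (e1 / 2 * (wl / wm)) ltac:(apply Rmult_lt_0_compat; [lra|apply Hq]) H0) as S0.
    assert (wl * SS (phi tau) c < wl * (e1 / 2) ^ 2); [|nra].
    eapply Rle_lt_trans; [exact B1|]. eapply Rle_lt_trans; [exact CB|].
    eapply Rle_lt_trans; [exact B2|].
    assert (wm * (e1 / 2 * (wl / wm)) ^ 2 <= wl * (e1 / 2) ^ 2).
    { replace (wm * (e1 / 2 * (wl / wm)) ^ 2) with (wl * (e1 / 2) ^ 2 * (wl / wm)) by (field; lra).
      pose proof (pow2_ge_0 (e1/2)).
      rewrite <- (Rmult_1_r (wl * (e1/2)^2)) at 2. apply Rmult_le_compat_l; [|apply Hq].
      apply Rmult_le_pos; lra. }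
    nra. }
  pose proof (V_cont p T phi c 1 1 1 1 tau Hsol ltac:(lra)) as CC.
  destruct (CC ((e1 / 2) ^ 2) ltac:(nra)) as [del [Hdel Hc]].
  assert (CC2 : forall u, tau <= u < tau + del -> dist4 (phi u) c < e1).
  { intros u Hu. apply SS_lt_dist; [lra|].
    destruct (Req_dec u tau) as [->|Hne]; [nra|].
    assert (R_dist (Vw c 1 1 1 1 (phi (Rmax u 0))) (Vw c 1 1 1 1 (phi (Rmax tau 0))) < (e1 / 2) ^ 2).
    { apply Hc. split. { split; [exact I|auto]. } simpl. unfold R_dist. rewrite Rabs_right; lra. }
    rewrite (Rmax_left u 0), (Rmax_left tau 0) in H by lra. rewrite <- !SS_V1 in H.
    simpl in H. unfold R_dist in H. pose proof (Rle_abs (SS (phi u) c - SS (phi tau) c)). nra. }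
  set (t' := Rmin (tau + del / 2) t1).
  assert (Et : E t').
  { split. { split. unfold t'. apply Rmin_glb; lra. apply Rmin_r. }
    intros u Hu. destruct (Rlt_dec u tau). { apply CA; lra. }
    apply CC2. split; [lra|]. assert (t' <= tau + del / 2) by apply Rmin_l. lra. }
  assert (t' <= tau) by (apply Hub; exact Et).
  assert (t' = t1).
  { unfold t' in *. unfold Rmin in *. destruct (Rle_dec (tau + del / 2) t1); lra. }
  assert (tau = t1) by lra. subst tau.
  assert (dist4 (phi t1) c < e1 / 2) by (apply SS_lt_dist; lra). lra.
Qed.

Lemma dl_expk k x : derivable_pt_lim (fun s => exp (k * s)) x (k * exp (k * x)).
Proof.
  pose proof (derivable_pt_lim_comp (fun s => k * s) exp x k (exp (k * x))) as H.
  eapply dl_eq; [|apply H]. ring.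
  - apply dl_ext with (f := fun s => k * s). intros; auto.
    eapply dl_eq; [|apply dl_mult; [apply dl_const|apply derivable_pt_lim_id]]. cbv beta; ring.
  - apply derivable_pt_lim_exp.
Qed.

Lemma cp_expk k x : continuity_pt (fun s => exp (k * s)) x.
Proof. apply derivable_continuous_pt. exists (k * exp (k * x)). apply dl_expk. Qed.

Lemma V_ge0 c w1 w2 w3 w4 z : 0 < w1 -> 0 < w2 -> 0 < w3 -> 0 < w4 -> 0 <= Vw c w1 w2 w3 w4 z.
Proof.
  intros. pose proof (V_bounds c w1 w2 w3 w4 z H H0 H1 H2) as [B _].
  pose proof (wl_pos w1 w2 w3 w4 H H0 H1 H2). pose proof (SS_ge0 z c). nra.
Qed.

Theorem lyap p c w1 w2 w3 w4 r k :
  0 < w1 -> 0 < w2 -> 0 < w3 -> 0 < w4 -> 0 < r -> 0 < k ->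
  (forall z, dist4 z c < r -> Ww p c w1 w2 w3 w4 z <= - k * SS z c) ->
  loc_asym_stable p c.
Proof.
  intros H1 H2 H3 H4 Hr Hk HW.
  set (wl := Rmin (Rmin w1 w2) (Rmin w3 w4)). set (wm := w1 + w2 + w3 + w4).
  assert (Hwl : 0 < wl) by (apply wl_pos; auto).
  assert (Hwlm : wl <= wm) by (apply wl_le; auto).
  assert (Hwm : 0 < wm) by lra.
  assert (Hq : 0 < wl / wm) by (apply Rdiv_lt_0_compat; lra).
  split.
  - intros eps Heps. set (e1 := Rmin eps r).
    assert (He1 : 0 < e1 <= r) by (split; [apply Rmin_glb_lt; lra|apply Rmin_r]).
    exists (e1 / 2 * (wl / wm)). split. { apply Rmult_lt_0_compat; lra. }
    intros T phi Hsol H0 t Ht. eapply Rlt_le_trans.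
    + eapply (stab_core p c w1 w2 w3 w4 r k); eauto.
    + apply Rmin_l.
  - exists (r / 2 * (wl / wm)). split. { apply Rmult_lt_0_compat; lra. }
    intros phi Hall H0 eps Heps.
    assert (Hin : forall t, 0 <= t -> dist4 (phi t) c < r).
    { intros t Ht. apply (stab_core p c w1 w2 w3 w4 r k H1 H2 H3 H4 Hr Hk HW r (t + 1) phi
        ltac:(lra) (Hall (t + 1) ltac:(lra)) H0 t ltac:(lra)). }
    set (k' := k / wm). assert (Hk' : 0 < k') by (apply Rdiv_lt_0_compat; lra).
    set (V0 := Vw c w1 w2 w3 w4 (phi 0)).
    assert (HV0 : 0 <= V0) by (apply V_ge0; auto).
    assert (Dec : forall t, 0 <= t -> Vw c w1 w2 w3 w4 (phi t) * exp (k' * t) <= V0).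
    { intros t Ht. pose proof (Hall (t + 1) ltac:(lra)) as Hsol.
      pose proof (decr (fun s => Vw c w1 w2 w3 w4 (phi (Rmax s 0)) * exp (k' * s))
        (fun s => Ww p c w1 w2 w3 w4 (phi s) * exp (k' * s) + Vw c w1 w2 w3 w4 (phi s) * (k' * exp (k' * s)))
        0 t Ht) as D.
      cbv beta in D. rewrite (Rmax_left t 0), (Rmax_left 0 0) in D by lra.
      rewrite Rmult_0_r, exp_0, Rmult_1_r in D. apply D.
      - intros x Hx. pose proof (dl_mult _ _ x _ _ (V_deriv p (t + 1) phi c w1 w2 w3 w4 x Hsol ltac:(lra)) (dl_expk k' x)) as DD.
        cbv beta in DD. rewrite (Rmax_left x 0) in DD by lra. exact DD.
      - intros x Hx. apply cp_mult. apply (V_cont p (t + 1)); auto; lra. apply cp_expk.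
      - intros x Hx. pose proof (exp_pos (k' * x)).
        pose proof (HW (phi x) (Hin x ltac:(lra))).
        pose proof (V_bounds c w1 w2 w3 w4 (phi x) H1 H2 H3 H4) as [_ B]. fold wm in B.
        assert (k' * Vw c w1 w2 w3 w4 (phi x) <= k * SS (phi x) c).
        { unfold k'. apply Rmult_le_reg_l with wm; [lra|].
          replace (wm * (k / wm * Vw c w1 w2 w3 w4 (phi x))) with (k * Vw c w1 w2 w3 w4 (phi x)) by (field; lra).
          pose proof (SS_ge0 (phi x) c). nra. }
        nra. }
    exists (V0 / (wl * k' * eps ^ 2) + 1). intros t Ht.
    assert (P : 0 < wl * k' * eps ^ 2) by (apply Rmult_lt_0_compat; [apply Rmult_lt_0_compat; lra|apply pow_lt; lra]).
    assert (0 <= V0 / (wl * k' * eps ^ 2)) by (apply Rmult_le_pos; [lra|apply Rlt_le, Rinv_0_lt_compat; lra]).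
    pose proof (Dec t ltac:(lra)) as Dt.
    pose proof (exp_ineq1_le (k' * t)).
    pose proof (V_bounds c w1 w2 w3 w4 (phi t) H1 H2 H3 H4) as [B _]. fold wl in B.
    pose proof (SS_ge0 (phi t) c).
    apply SS_lt_dist; [lra|].
    assert (V0 < wl * k' * eps ^ 2 * t).
    { assert (V0 = wl * k' * eps ^ 2 * (V0 / (wl * k' * eps ^ 2))) by (field; lra). nra. }
    assert (wl * SS (phi t) c * (1 + k' * t) <= V0).
    { eapply Rle_trans; [|exact Dt]. apply Rmult_le_compat; try nra. }
    assert (0 < eps ^ 2) by (apply pow_lt; lra).
    assert (Hpos : 0 < wl * (1 + k' * t)) by (apply Rmult_lt_0_compat; nra).
    destruct (Rlt_dec (SS (phi t) c) (eps ^ 2)) as [|Hn]; auto. exfalso.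
    apply Rnot_lt_le in Hn.
    assert (wl * (1 + k' * t) * eps ^ 2 <= wl * (1 + k' * t) * SS (phi t) c) by (apply Rmult_le_compat_l; lra).
    assert (wl * k' * eps ^ 2 * t <= wl * (1 + k' * t) * eps ^ 2) by nra.
    nra.
Qed.

Lemma W_bigO p c w1 w2 w3 w4 L1 L2 L3 L4 :
  bigO c 2 (fun z => sx1 (F p z) - L1 z) -> bigO c 2 (fun z => sx2 (F p z) - L2 z) ->
  bigO c 2 (fun z => su1 (F p z) - L3 z) -> bigO c 2 (fun z => su2 (F p z) - L4 z) ->
  bigO c 3 (fun z => Ww p c w1 w2 w3 w4 z -
     (2 * w1 * (sx1 z - sx1 c) * L1 z + 2 * w2 * (sx2 z - sx2 c) * L2 z
      + 2 * w3 * (su1 z - su1 c) * L3 z + 2 * w4 * (su2 z - su2 c) * L4 z)).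
Proof.
  intros A1 A2 A3 A4.
  apply bigO_ext_all with (g := fun z =>
    (2 * w1) * (sx1 z - sx1 c) * (sx1 (F p z) - L1 z) + (2 * w2) * (sx2 z - sx2 c) * (sx2 (F p z) - L2 z)
    + (2 * w3) * (su1 z - su1 c) * (su1 (F p z) - L3 z) + (2 * w4) * (su2 z - su2 c) * (su2 (F p z) - L4 z)).
  { intros z. unfold Ww. ring. }
  repeat apply bigO_plus;
  (apply (bigO_mult c 1 2); [apply (bigO_mult c 0 1); [apply bigO_const|]|]; auto).
  apply bigO_y1. apply bigO_y2. apply bigO_y3. apply bigO_y4.
Qed.

Lemma stable_from p c w1 w2 w3 w4 q L1 L2 L3 L4 :
  0 < w1 -> 0 < w2 -> 0 < w3 -> 0 < w4 -> 0 < q ->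
  (forall z, 2 * w1 * (sx1 z - sx1 c) * L1 z + 2 * w2 * (sx2 z - sx2 c) * L2 z
      + 2 * w3 * (su1 z - su1 c) * L3 z + 2 * w4 * (su2 z - su2 c) * L4 z <= - q * SS z c) ->
  bigO c 2 (fun z => sx1 (F p z) - L1 z) -> bigO c 2 (fun z => sx2 (F p z) - L2 z) ->
  bigO c 2 (fun z => su1 (F p z) - L3 z) -> bigO c 2 (fun z => su2 (F p z) - L4 z) ->
  loc_asym_stable p c.
Proof.
  intros H1 H2 H3 H4 Hq HQ A1 A2 A3 A4.
  pose proof (W_bigO p c w1 w2 w3 w4 L1 L2 L3 L4 A1 A2 A3 A4) as B.
  destruct (bigO_Mpos _ _ _ B) as [M [HM [r [Hr N]]]].
  set (r' := Rmin r (q / (2 * M))).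
  assert (Hr' : 0 < r') by (apply Rmin_glb_lt; [lra|apply Rdiv_lt_0_compat; lra]).
  apply (lyap p c w1 w2 w3 w4 r' (q / 2)); auto; [lra|].
  intros z Hz.
  assert (dist4 z c < r) by (eapply Rlt_le_trans; [exact Hz|apply Rmin_l]).
  assert (Hd : dist4 z c < q / (2 * M)) by (eapply Rlt_le_trans; [exact Hz|apply Rmin_r]).
  specialize (N z H). specialize (HQ z).
  set (W := Ww p c w1 w2 w3 w4 z) in *.
  set (Qz := 2 * w1 * (sx1 z - sx1 c) * L1 z + 2 * w2 * (sx2 z - sx2 c) * L2 z
      + 2 * w3 * (su1 z - su1 c) * L3 z + 2 * w4 * (su2 z - su2 c) * L4 z) in *.
  pose proof (Rle_abs (W - Qz)).
  pose proof (dist4_ge0 z c). pose proof (dist4_sq z c).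
  assert (M * dist4 z c < q / 2).
  { apply Rmult_lt_compat_l with (r := M) in Hd; [|lra].
    replace (M * (q / (2 * M))) with (q / 2) in Hd by (field; lra). lra. }
  assert (M * dist4 z c ^ 3 = (M * dist4 z c) * dist4 z c ^ 2) by ring.
  assert (0 <= SS z c) by apply SS_ge0.
  assert (M * dist4 z c * SS z c <= q / 2 * SS z c) by (apply Rmult_le_compat_r; lra).
  nra.
Qed.

Lemma bigO_u1 c : su1 c = 0 -> bigO c 1 (fun z => su1 z).
Proof. intros H. eapply bigO_ext_all; [|apply bigO_y3]. intros; cbv beta; rewrite H; ring. Qed.
Lemma bigO_u2 c : su2 c = 0 -> bigO c 1 (fun z => su2 z).
Proof. intros H. eapply bigO_ext_all; [|apply bigO_y4]. intros; cbv beta; rewrite H; ring. Qed.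
Lemma bigO_x1 c : bigO c 0 (fun z => sx1 z).
Proof.
  eapply bigO_ext_all with (g := fun z => (sx1 z - sx1 c) + sx1 c); [intros; ring|].
  apply bigO_plus; [apply bigO_weak, bigO_y1|apply bigO_const].
Qed.
Lemma bigO_x2 c : bigO c 0 (fun z => sx2 z).
Proof.
  eapply bigO_ext_all with (g := fun z => (sx2 z - sx2 c) + sx2 c); [intros; ring|].
  apply bigO_plus; [apply bigO_weak, bigO_y2|apply bigO_const].
Qed.

Lemma bigO_sq c f : bigO c 1 f -> bigO c 2 (fun z => f z * f z).
Proof. intros H. apply (bigO_mult c 1 1); auto. Qed.

Lemma bigO_aa p c : su1 c = 0 -> su2 c = 0 ->
  bigO c 2 (fun z => aa p (su1 z) (su2 z) - a0 p).
Proof.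
  intros H1 H2. unfold aa.
  apply bigO_ext_all with (g := fun z => a0 p * (exp ((- / (2 * sa p ^ 2)) * ((su1 z - su2 z) * (su1 z - su2 z))) - 1)).
  { intros z. unfold Rdiv. replace (- (su1 z - su2 z) ^ 2 * / (2 * sa p ^ 2)) with
      ((- / (2 * sa p ^ 2)) * ((su1 z - su2 z) * (su1 z - su2 z))) by ring. ring. }
  apply (bigO_mult c 0 2); [apply bigO_const|]. apply bigO_exp.
  apply (bigO_mult c 0 2); [apply bigO_const|]. apply bigO_sq.
  apply bigO_minus; [apply bigO_u1|apply bigO_u2]; auto.
Qed.

Lemma bigO_aa0 p c : su1 c = 0 -> su2 c = 0 -> bigO c 0 (fun z => aa p (su1 z) (su2 z)).
Proof.
  intros. apply bigO_ext_all with (g := fun z => (aa p (su1 z) (su2 z) - a0 p) + a0 p); [intros; ring|].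
  apply bigO_plus; [|apply bigO_const]. apply (bigO_weak0 c 2). apply bigO_aa; auto.
Qed.

Lemma bigO_iK1 p c : su1 c = 0 -> bigO c 2 (fun z => / K1 p (su1 z) - / K01 p).
Proof.
  intros H1. unfold K1.
  apply bigO_ext_all with (g := fun z => / K01 p * (exp ((/ (2 * sK1 p ^ 2)) * (su1 z * su1 z)) - 1)).
  { intros z. rewrite Rinv_mult, <- exp_Ropp. unfold Rdiv.
    replace (- (- su1 z ^ 2 * / (2 * sK1 p ^ 2))) with ((/ (2 * sK1 p ^ 2)) * (su1 z * su1 z)) by ring. ring. }
  apply (bigO_mult c 0 2); [apply bigO_const|]. apply bigO_exp.
  apply (bigO_mult c 0 2); [apply bigO_const|]. apply bigO_sq. apply bigO_u1; auto.
Qed.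

Lemma bigO_iK2 p c : su2 c = 0 -> bigO c 2 (fun z => / K2 p (su2 z) - / K02 p).
Proof.
  intros H1. unfold K2.
  apply bigO_ext_all with (g := fun z => / K02 p * (exp ((/ (2 * sK2 p ^ 2)) * (su2 z * su2 z)) - 1)).
  { intros z. rewrite Rinv_mult, <- exp_Ropp. unfold Rdiv.
    replace (- (- su2 z ^ 2 * / (2 * sK2 p ^ 2))) with ((/ (2 * sK2 p ^ 2)) * (su2 z * su2 z)) by ring. ring. }
  apply (bigO_mult c 0 2); [apply bigO_const|]. apply bigO_exp.
  apply (bigO_mult c 0 2); [apply bigO_const|]. apply bigO_sq. apply bigO_u2; auto.
Qed.

Lemma bigO_iK1_0 p c : su1 c = 0 -> bigO c 0 (fun z => / K1 p (su1 z)).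
Proof.
  intros. apply bigO_ext_all with (g := fun z => (/ K1 p (su1 z) - / K01 p) + / K01 p); [intros; ring|].
  apply bigO_plus; [|apply bigO_const]. apply (bigO_weak0 c 2). apply bigO_iK1; auto.
Qed.
Lemma bigO_iK2_0 p c : su2 c = 0 -> bigO c 0 (fun z => / K2 p (su2 z)).
Proof.
  intros. apply bigO_ext_all with (g := fun z => (/ K2 p (su2 z) - / K02 p) + / K02 p); [intros; ring|].
  apply bigO_plus; [|apply bigO_const]. apply (bigO_weak0 c 2). apply bigO_iK2; auto.
Qed.

Lemma bigO_B p c : su1 c = 0 -> su2 c = 0 ->
  bigO c 1 (fun z => (1 + h p * aa p (su1 z) (su2 z) * sx1 z) - (1 + h p * a0 p * sx1 c)).
Proof.
  intros. apply bigO_ext_all with (g := fun z => h p * ((aa p (su1 z) (su2 z) - a0 p) * sx1 z) + h p * a0 p * (sx1 z - sx1 c)).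
  { intros; ring. }
  apply bigO_plus.
  - apply (bigO_mult c 0 1); [apply bigO_const|]. apply (bigO_mult c 1 0); [apply bigO_weak, bigO_aa; auto|apply bigO_x1].
  - apply (bigO_mult c 0 1); [apply bigO_const|apply bigO_y1].
Qed.

Lemma bigO_B0 p c : bigO c 1 (fun z => (1 + h p * a0 p * sx1 z) - (1 + h p * a0 p * sx1 c)).
Proof.
  apply bigO_ext_all with (g := fun z => h p * a0 p * (sx1 z - sx1 c)); [intros; ring|].
  apply (bigO_mult c 0 1); [apply bigO_const|apply bigO_y1].
Qed.

Lemma bigO_swap c k f g : bigO c k (fun z => g z - f z) -> bigO c k (fun z => f z - g z).
Proof. intros H. apply bigO_ext_all with (g := fun z => - (g z - f z)); [intros; ring|]. apply bigO_opp; auto. Qed.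

Ltac solveO := first
 [ assumption
 | apply bigO_swap; assumption
 | apply bigO_const
 | apply bigO_weak; assumption
 | apply (bigO_weak0 _ 1); assumption
 | apply (bigO_weak0 _ 2); assumption
 | apply bigO_plus; solveO
 | apply bigO_minus; solveO
 | apply bigO_opp; solveO
 | multO ]
with multO := match goal with
 | |- bigO ?c 0 (fun z => _ * _) => apply (bigO_mult c 0 0); solveO
 | |- bigO ?c 1 (fun z => _ * _) => first [apply (bigO_mult c 1 0); solveO | apply (bigO_mult c 0 1); solveO]
 | |- bigO ?c 2 (fun z => _ * _) => first [apply (bigO_mult c 1 1); solveO | apply (bigO_mult c 0 2); solveO | apply (bigO_mult c 2 0); solveO]
 end.

Lemma bigO_x2_0 c : sx2 c = 0 -> bigO c 1 (fun z => sx2 z).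
Proof. intros H. eapply bigO_ext_all; [|apply bigO_y2]. intros; cbv beta; rewrite H; ring. Qed.

Lemma quad_i (r1 k g c1 c2 y1 y2 y3 y4 : R) : 0 < r1 -> g < 0 -> 0 < c1 -> 0 < c2 ->
  2 * 1 * y1 * (- r1 * y1 - k * y2) + 2 * ((r1 + k ^ 2 / r1) / (- 2 * g)) * y2 * (g * y2)
  + 2 * (c2 / c1) * y3 * (- c1 * y3) + 2 * 1 * y4 * (c2 * (y3 - y4))
  <= - Rmin r1 c2 * (y1 ^ 2 + y2 ^ 2 + y3 ^ 2 + y4 ^ 2).
Proof.
  intros. set (m := Rmin r1 c2).
  assert (m <= r1) by apply Rmin_l. assert (m <= c2) by apply Rmin_r.
  assert (E : 2 * 1 * y1 * (- r1 * y1 - k * y2) + 2 * ((r1 + k ^ 2 / r1) / (- 2 * g)) * y2 * (g * y2)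
  + 2 * (c2 / c1) * y3 * (- c1 * y3) + 2 * 1 * y4 * (c2 * (y3 - y4))
   = - (r1 * y1 + k * y2) ^ 2 / r1 - c2 * (y3 - y4) ^ 2 - r1 * y1 ^ 2 - r1 * y2 ^ 2 - c2 * y3 ^ 2 - c2 * y4 ^ 2).
  { field. lra. }
  rewrite E.
  assert (0 <= (r1 * y1 + k * y2) ^ 2 / r1) by (apply Rmult_le_pos; [apply pow2_ge_0|apply Rlt_le, Rinv_0_lt_compat; lra]).
  pose proof (pow2_ge_0 (y3 - y4)). pose proof (pow2_ge_0 y1). pose proof (pow2_ge_0 y2).
  pose proof (pow2_ge_0 y3). pose proof (pow2_ge_0 y4). nra.
Qed.

Section S1.
End S1.

Lemma stable_i (p : params)
  (HK01 : 0 < K01 p) (HK02 : 0 < K02 p) (HsK1 : 0 < sK1 p) (HsK2 : 0 < sK2 p)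
  (Ha0 : 0 < a0 p) (Hsa : 0 < sa p)
  (Hr1 : 0 < r1 p) (Hr2 : 0 < r2 p) (Hh : 0 < h p) (He : 0 < e p)
  (Hs1 : 0 < s1 p) (Hs2 : 0 < s2 p)
  (Hg : e p * a0 p * K01 p * / (1 + h p * a0 p * K01 p) - d p + r2 p < 0) :
  loc_asym_stable p (mkState (K01 p) 0 0 0).
Proof.
  set (c := mkState (K01 p) 0 0 0).
  set (Bs := 1 + h p * a0 p * K01 p) in *.
  assert (HBs : 0 < Bs) by (unfold Bs; pose proof (Rmult_lt_0_compat _ _ (Rmult_lt_0_compat _ _ Hh Ha0) HK01); lra).
  set (qs := / Bs) in *.
  assert (Hqs : 0 < qs) by (apply Rinv_0_lt_compat; auto).
  destruct (bigO_inv_all c (fun z => 1 + h p * aa p (su1 z) (su2 z) * sx1 z) Bs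
     (bigO_B p c eq_refl eq_refl) HBs) as [NB [Q0 Q1]].
  fold qs in Q1.
  assert (A0 := bigO_aa0 p c eq_refl eq_refl). assert (A2 := bigO_aa p c eq_refl eq_refl).
  assert (X1 : bigO c 1 (fun z => sx1 z * aa p (su1 z) (su2 z) * / (1 + h p * aa p (su1 z) (su2 z) * sx1 z) - K01 p * a0 p * qs)).
  { apply bigO_ext_all with (g := fun z => (sx1 z - sx1 c) * aa p (su1 z) (su2 z) * / (1 + h p * aa p (su1 z) (su2 z) * sx1 z)
       + K01 p * ((aa p (su1 z) (su2 z) - a0 p) * / (1 + h p * aa p (su1 z) (su2 z) * sx1 z))
       + K01 p * a0 p * (/ (1 + h p * aa p (su1 z) (su2 z) * sx1 z) - qs)).
    { intros z. simpl. ring. }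
    repeat apply bigO_plus.
    - apply (bigO_mult c 1 0); auto. apply (bigO_mult c 1 0); auto. apply bigO_y1.
    - apply (bigO_mult c 0 1); [apply bigO_const|]. apply (bigO_mult c 1 0); auto. apply bigO_weak; auto.
    - apply (bigO_mult c 0 1); [apply bigO_const|]. auto. }
  set (k := K01 p * a0 p * qs).
  set (g := e p * a0 p * K01 p * qs - d p + r2 p) in *.
  set (c1 := s1 p ^ 2 * r1 p / sK1 p ^ 2).
  set (c2 := s2 p ^ 2 * e p * k * qs / sa p ^ 2).
  assert (Hc1 : 0 < c1) by (unfold c1; apply Rdiv_lt_0_compat; [apply Rmult_lt_0_compat; [apply pow_lt|]|apply pow_lt]; lra).
  assert (Hk : 0 < k) by (unfold k; repeat apply Rmult_lt_0_compat; lra).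
  assert (Hc2 : 0 < c2) by (unfold c2; apply Rdiv_lt_0_compat; [repeat apply Rmult_lt_0_compat; try apply pow_lt|apply pow_lt]; lra).
  apply (stable_from p c 1 ((r1 p + k ^ 2 / r1 p) / (- 2 * g)) (c2 / c1) 1 (Rmin (r1 p) c2)
     (fun z => - r1 p * (sx1 z - K01 p) - k * sx2 z)
     (fun z => g * sx2 z)
     (fun z => - c1 * su1 z)
     (fun z => c2 * (su1 z - su2 z))).
  - lra.
  - apply Rdiv_lt_0_compat; [|lra].
    assert (0 <= k ^ 2 / r1 p) by (apply Rmult_le_pos; [apply pow2_ge_0|apply Rlt_le, Rinv_0_lt_compat; lra]). lra.
  - apply Rdiv_lt_0_compat; lra.
  - lra.
  - apply Rmin_glb_lt; lra.
  - intros z. unfold SS. simpl.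
    replace (sx2 z - 0) with (sx2 z) by ring. replace (su1 z - 0) with (su1 z) by ring.
    replace (su2 z - 0) with (su2 z) by ring.
    apply quad_i; auto.
  -
    apply bigO_ext_all with (g := fun z => - (r1 p / K01 p) * ((sx1 z - sx1 c) * (sx1 z - sx1 c))
       - r1 p * (sx1 z * sx1 z) * (/ K1 p (su1 z) - / K01 p)
       - sx2 z * (sx1 z * aa p (su1 z) (su2 z) * / (1 + h p * aa p (su1 z) (su2 z) * sx1 z) - K01 p * a0 p * qs)).
    { intros z. unfold F, c. cbn beta iota zeta delta [sx1 sx2 su1 su2]. unfold Rdiv.
      set (iK := / K1 p (su1 z)). set (iB := / (1 + h p * aa p (su1 z) (su2 z) * sx1 z)).
      unfold k. field. lra. }
    apply bigO_minus; [apply bigO_minus|].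
    + apply (bigO_mult c 0 2); [apply bigO_const|]. apply bigO_sq, bigO_y1.
    + apply (bigO_mult c 0 2); [|apply bigO_iK1; reflexivity].
      apply (bigO_mult c 0 0); [apply bigO_const|]. apply (bigO_mult c 0 0); apply bigO_x1.
    + apply (bigO_mult c 1 1); auto. apply bigO_x2_0; reflexivity.
  -
    apply bigO_ext_all with (g := fun z => e p * sx2 z * (sx1 z * aa p (su1 z) (su2 z) * / (1 + h p * aa p (su1 z) (su2 z) * sx1 z) - K01 p * a0 p * qs)
       - r2 p * (sx2 z * sx2 z) * / K2 p (su2 z)).
    { intros z. unfold F, c. cbn beta iota zeta delta [sx1 sx2 su1 su2]. unfold Rdiv.
      set (iK := / K2 p (su2 z)). set (iB := / (1 + h p * aa p (su1 z) (su2 z) * sx1 z)).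
      unfold g. ring. }
    apply bigO_minus.
    + apply (bigO_mult c 1 1); auto. apply (bigO_mult c 0 1); [apply bigO_const|]. apply bigO_x2_0; reflexivity.
    + apply (bigO_mult c 2 0); [|apply bigO_iK2_0; reflexivity].
      apply (bigO_mult c 0 2); [apply bigO_const|]. apply bigO_sq, bigO_x2_0; reflexivity.
  -
    apply bigO_ext_all with (g := fun z => s1 p ^ 2 * (- (r1 p / sK1 p ^ 2) * su1 z *
         ((sx1 z - sx1 c) * / K1 p (su1 z) + K01 p * (/ K1 p (su1 z) - / K01 p))
       + / sa p ^ 2 * ((su1 z - su2 z) * sx2 z) * (aa p (su1 z) (su2 z) * (/ (1 + h p * aa p (su1 z) (su2 z) * sx1 z) * / (1 + h p * aa p (su1 z) (su2 z) * sx1 z))))).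
    { intros z. unfold F, c. cbn beta iota zeta delta [sx1 sx2 su1 su2]. unfold Rdiv. rewrite !Rinv_mult, <- !pow_inv.
      set (iK := / K1 p (su1 z)). set (iB := / (1 + h p * aa p (su1 z) (su2 z) * sx1 z)).
      unfold c1. unfold Rdiv. field. split; lra. }
    apply (bigO_mult c 0 2); [apply bigO_const|]. apply bigO_plus.
    + apply (bigO_mult c 1 1).
      * apply (bigO_mult c 0 1); [apply bigO_const|apply bigO_u1; reflexivity].
      * apply bigO_plus. apply (bigO_mult c 1 0); [apply bigO_y1|apply bigO_iK1_0; reflexivity].
        apply (bigO_mult c 0 1); [apply bigO_const|apply bigO_weak, bigO_iK1; reflexivity].
    + apply (bigO_mult c 2 0). apply (bigO_mult c 0 2); [apply bigO_const|].
      apply (bigO_mult c 1 1). apply bigO_minus; [apply bigO_u1|apply bigO_u2]; reflexivity.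
      apply bigO_x2_0; reflexivity.
      apply (bigO_mult c 0 0); auto. apply (bigO_mult c 0 0); auto.
  -
    assert (X2 : bigO c 1 (fun z => sx1 z * aa p (su1 z) (su2 z) * (/ (1 + h p * aa p (su1 z) (su2 z) * sx1 z) * / (1 + h p * aa p (su1 z) (su2 z) * sx1 z)) - K01 p * a0 p * (qs * qs))).
    { apply bigO_ext_all with (g := fun z => (sx1 z * aa p (su1 z) (su2 z) * / (1 + h p * aa p (su1 z) (su2 z) * sx1 z) - K01 p * a0 p * qs) * / (1 + h p * aa p (su1 z) (su2 z) * sx1 z)
          + K01 p * a0 p * qs * (/ (1 + h p * aa p (su1 z) (su2 z) * sx1 z) - qs)).
      { intros; ring. }
      apply bigO_plus. apply (bigO_mult c 1 0); auto. apply (bigO_mult c 0 1); [apply bigO_const|auto]. }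
    apply bigO_ext_all with (g := fun z => s2 p ^ 2 * (- (r2 p / sK2 p ^ 2) * (sx2 z * su2 z) * / K2 p (su2 z)
       + e p / sa p ^ 2 * (su1 z - su2 z) * (sx1 z * aa p (su1 z) (su2 z) * (/ (1 + h p * aa p (su1 z) (su2 z) * sx1 z) * / (1 + h p * aa p (su1 z) (su2 z) * sx1 z)) - K01 p * a0 p * (qs * qs)))).
    { intros z. unfold F, c. cbn beta iota zeta delta [sx1 sx2 su1 su2]. unfold Rdiv. rewrite !Rinv_mult, <- !pow_inv.
      set (iK := / K2 p (su2 z)). set (iB := / (1 + h p * aa p (su1 z) (su2 z) * sx1 z)).
      unfold c2, k. unfold Rdiv. field. lra. }
    apply (bigO_mult c 0 2); [apply bigO_const|]. apply bigO_plus.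
    + apply (bigO_mult c 2 0); [|apply bigO_iK2_0; reflexivity].
      apply (bigO_mult c 0 2); [apply bigO_const|]. apply (bigO_mult c 1 1).
      apply bigO_x2_0; reflexivity. apply bigO_u2; reflexivity.
    + apply (bigO_mult c 1 1); auto. apply (bigO_mult c 0 1); [apply bigO_const|].
      apply bigO_minus; [apply bigO_u1|apply bigO_u2]; reflexivity.
Qed.

Lemma quad_ii (a11 a12 a21 a22 b11 b12 b21 b22 y1 y2 y3 y4 : R) :
  a11 < 0 -> a12 < 0 -> 0 < a21 -> a22 < 0 -> b11 < 0 -> b12 < 0 -> 0 < b21 -> b22 < 0 ->
  2 * a21 * y1 * (a11 * y1 + a12 * y2) + 2 * (- a12) * y2 * (a21 * y1 + a22 * y2)
  + 2 * b21 * y3 * (b11 * y3 + b12 * y4) + 2 * (- b12) * y4 * (b21 * y3 + b22 * y4)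
  <= - Rmin (Rmin (-2 * a21 * a11) (2 * a12 * a22)) (Rmin (-2 * b21 * b11) (2 * b12 * b22))
     * (y1 ^ 2 + y2 ^ 2 + y3 ^ 2 + y4 ^ 2).
Proof.
  intros. set (m := Rmin (Rmin (-2 * a21 * a11) (2 * a12 * a22)) (Rmin (-2 * b21 * b11) (2 * b12 * b22))).
  assert (m <= -2 * a21 * a11) by (unfold m; eapply Rle_trans; apply Rmin_l).
  assert (m <= 2 * a12 * a22) by (unfold m; eapply Rle_trans; [apply Rmin_l|apply Rmin_r]).
  assert (m <= -2 * b21 * b11) by (unfold m; eapply Rle_trans; [apply Rmin_r|apply Rmin_l]).
  assert (m <= 2 * b12 * b22) by (unfold m; eapply Rle_trans; apply Rmin_r).
  assert (E : 2 * a21 * y1 * (a11 * y1 + a12 * y2) + 2 * (- a12) * y2 * (a21 * y1 + a22 * y2)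
  + 2 * b21 * y3 * (b11 * y3 + b12 * y4) + 2 * (- b12) * y4 * (b21 * y3 + b22 * y4)
   = (2 * a21 * a11) * y1 ^ 2 - (2 * a12 * a22) * y2 ^ 2 + (2 * b21 * b11) * y3 ^ 2 - (2 * b12 * b22) * y4 ^ 2) by ring.
  rewrite E.
  pose proof (pow2_ge_0 y1). pose proof (pow2_ge_0 y2). pose proof (pow2_ge_0 y3). pose proof (pow2_ge_0 y4).
  assert ((m + 2 * a21 * a11) * y1 ^ 2 <= 0) by nra.
  assert ((m - 2 * a12 * a22) * y2 ^ 2 <= 0) by nra.
  assert ((m + 2 * b21 * b11) * y3 ^ 2 <= 0) by nra.
  assert ((m - 2 * b12 * b22) * y4 ^ 2 <= 0) by nra.
  nra.
Qed.

Lemma stable_ii (p : params)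
  (HK01 : 0 < K01 p) (HK02 : 0 < K02 p) (HsK1 : 0 < sK1 p) (HsK2 : 0 < sK2 p)
  (Ha0 : 0 < a0 p) (Hsa : 0 < sa p)
  (Hr1 : 0 < r1 p) (Hr2 : 0 < r2 p) (Hh : 0 < h p) (He : 0 < e p)
  (Hs1 : 0 < s1 p) (Hs2 : 0 < s2 p) (x1s x2s : R) (Hx1 : 0 < x1s) (Hx2 : 0 < x2s)
  (HG1 : r1 p - r1 p * x1s * / K01 p - a0 p * x2s * / (1 + h p * a0 p * x1s) = 0)
  (HG2 : e p * a0 p * x1s * / (1 + h p * a0 p * x1s) - d p + r2 p - r2 p * x2s * / K02 p = 0)
  (HJ : - r1 p / K01 p + h p * a0 p ^ 2 * x2s * (/ (1 + h p * a0 p * x1s)) ^ 2 < 0)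
  (HM : - (r1 p * x1s / (sK1 p ^ 2 * K01 p)) + x2s * a0 p * (/ (1 + h p * a0 p * x1s)) ^ 2 / sa p ^ 2 < 0) :
  loc_asym_stable p (mkState x1s x2s 0 0).
Proof.
  set (c := mkState x1s x2s 0 0).
  set (Bs := 1 + h p * a0 p * x1s) in *.
  assert (HBs : 0 < Bs) by (unfold Bs; pose proof (Rmult_lt_0_compat _ _ (Rmult_lt_0_compat _ _ Hh Ha0) Hx1); lra).
  set (qs := / Bs) in *.
  assert (Hqs : 0 < qs) by (apply Rinv_0_lt_compat; auto).
  destruct (bigO_inv_all c (fun z => 1 + h p * aa p (su1 z) (su2 z) * sx1 z) Bs
     (bigO_B p c eq_refl eq_refl) HBs) as [NB [Qa Qb]].
  destruct (bigO_inv_all c (fun z => 1 + h p * a0 p * sx1 z) Bs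
     (bigO_B0 p c) HBs) as [NB0 [P0 P1]].
  fold qs in Qb, P1.
  assert (A0 := bigO_aa0 p c eq_refl eq_refl). assert (A2 := bigO_aa p c eq_refl eq_refl).
  assert (K1o := bigO_iK1 p c eq_refl). assert (K1z := bigO_iK1_0 p c eq_refl).
  assert (K2o := bigO_iK2 p c eq_refl). assert (K2z := bigO_iK2_0 p c eq_refl).
  assert (HY1 : bigO c 1 (fun z => sx1 z - x1s)) by apply (bigO_y1 c).
  assert (HY2 : bigO c 1 (fun z => sx2 z - x2s)) by apply (bigO_y2 c).
  assert (X1 := bigO_x1 c). assert (X2 := bigO_x2 c).
  assert (U1 : bigO c 1 (fun z => su1 z)) by (apply bigO_u1; reflexivity).
  assert (U2 : bigO c 1 (fun z => su2 z)) by (apply bigO_u2; reflexivity).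
  assert (PK1 : bigO c 1 (fun z => sx1 z * / K1 p (su1 z) - x1s * / K01 p)).
  { apply bigO_ext_all with (g := fun z => (sx1 z - x1s) * / K1 p (su1 z) + x1s * (/ K1 p (su1 z) - / K01 p)); [intros; ring|].
    apply bigO_plus. apply (bigO_mult c 1 0); auto. apply (bigO_mult c 0 1); [apply bigO_const|apply bigO_weak; auto]. }
  assert (PK2 : bigO c 1 (fun z => sx2 z * / K2 p (su2 z) - x2s * / K02 p)).
  { apply bigO_ext_all with (g := fun z => (sx2 z - x2s) * / K2 p (su2 z) + x2s * (/ K2 p (su2 z) - / K02 p)); [intros; ring|].
    apply bigO_plus. apply (bigO_mult c 1 0); auto. apply (bigO_mult c 0 1); [apply bigO_const|apply bigO_weak; auto]. }
  assert (PA2 : bigO c 1 (fun z => sx2 z * aa p (su1 z) (su2 z) * / (1 + h p * aa p (su1 z) (su2 z) * sx1 z) - x2s * a0 p * qs)).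
  { apply bigO_ext_all with (g := fun z => (aa p (su1 z) (su2 z) - a0 p) * sx2 z * / (1 + h p * aa p (su1 z) (su2 z) * sx1 z) + a0 p * (sx2 z - x2s) * / (1 + h p * aa p (su1 z) (su2 z) * sx1 z) + a0 p * x2s * (/ (1 + h p * aa p (su1 z) (su2 z) * sx1 z) - qs)); [intros; ring|].
    repeat apply bigO_plus.
    - apply (bigO_mult c 1 0); auto. apply (bigO_mult c 1 0); auto. apply bigO_weak; auto.
    - apply (bigO_mult c 1 0); auto. apply (bigO_mult c 0 1); auto. apply bigO_const.
    - apply (bigO_mult c 0 1); auto. apply bigO_const. }
  assert (PA1 : bigO c 1 (fun z => sx1 z * aa p (su1 z) (su2 z) * / (1 + h p * aa p (su1 z) (su2 z) * sx1 z) - x1s * a0 p * qs)).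
  { apply bigO_ext_all with (g := fun z => (aa p (su1 z) (su2 z) - a0 p) * sx1 z * / (1 + h p * aa p (su1 z) (su2 z) * sx1 z) + a0 p * (sx1 z - x1s) * / (1 + h p * aa p (su1 z) (su2 z) * sx1 z) + a0 p * x1s * (/ (1 + h p * aa p (su1 z) (su2 z) * sx1 z) - qs)); [intros; ring|].
    repeat apply bigO_plus.
    - apply (bigO_mult c 1 0); auto. apply (bigO_mult c 1 0); auto. apply bigO_weak; auto.
    - apply (bigO_mult c 1 0); auto. apply (bigO_mult c 0 1); auto. apply bigO_const.
    - apply (bigO_mult c 0 1); auto. apply bigO_const. }
  assert (PB2 : bigO c 1 (fun z => sx2 z * aa p (su1 z) (su2 z) * (/ (1 + h p * aa p (su1 z) (su2 z) * sx1 z) * / (1 + h p * aa p (su1 z) (su2 z) * sx1 z)) - x2s * a0 p * (qs * qs))).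
  { apply bigO_ext_all with (g := fun z => (sx2 z * aa p (su1 z) (su2 z) * / (1 + h p * aa p (su1 z) (su2 z) * sx1 z) - x2s * a0 p * qs) * / (1 + h p * aa p (su1 z) (su2 z) * sx1 z) + x2s * a0 p * qs * (/ (1 + h p * aa p (su1 z) (su2 z) * sx1 z) - qs)); [intros; ring|].
    apply bigO_plus. apply (bigO_mult c 1 0); auto. apply (bigO_mult c 0 1); auto. apply bigO_const. }
  assert (PB1 : bigO c 1 (fun z => sx1 z * aa p (su1 z) (su2 z) * (/ (1 + h p * aa p (su1 z) (su2 z) * sx1 z) * / (1 + h p * aa p (su1 z) (su2 z) * sx1 z)) - x1s * a0 p * (qs * qs))).
  { apply bigO_ext_all with (g := fun z => (sx1 z * aa p (su1 z) (su2 z) * / (1 + h p * aa p (su1 z) (su2 z) * sx1 z) - x1s * a0 p * qs) * / (1 + h p * aa p (su1 z) (su2 z) * sx1 z) + x1s * a0 p * qs * (/ (1 + h p * aa p (su1 z) (su2 z) * sx1 z) - qs)); [intros; ring|].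
    apply bigO_plus. apply (bigO_mult c 1 0); auto. apply (bigO_mult c 0 1); auto. apply bigO_const. }
  assert (G1o : bigO c 1 (fun z => (r1 p * (1 - sx1 z / K1 p (su1 z)) - aa p (su1 z) (su2 z) * sx2 z / (1 + h p * aa p (su1 z) (su2 z) * sx1 z)))).
  { apply bigO_ext_all with (g := fun z => - r1 p * (sx1 z * / K1 p (su1 z) - x1s * / K01 p) - (sx2 z * aa p (su1 z) (su2 z) * / (1 + h p * aa p (su1 z) (su2 z) * sx1 z) - x2s * a0 p * qs)).
    { intros z. assert (E : (r1 p * (1 - sx1 z / K1 p (su1 z)) - aa p (su1 z) (su2 z) * sx2 z / (1 + h p * aa p (su1 z) (su2 z) * sx1 z)) - (- r1 p * (sx1 z * / K1 p (su1 z) - x1s * / K01 p) - (sx2 z * aa p (su1 z) (su2 z) * / (1 + h p * aa p (su1 z) (su2 z) * sx1 z) - x2s * a0 p * qs))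
          = r1 p - r1 p * x1s * / K01 p - a0 p * x2s * qs) by (unfold Rdiv; ring). lra. }
    apply bigO_minus; auto. apply (bigO_mult c 0 1); auto. apply bigO_const. }
  assert (G2o : bigO c 1 (fun z => (e p * aa p (su1 z) (su2 z) * sx1 z / (1 + h p * aa p (su1 z) (su2 z) * sx1 z) - d p + r2 p * (1 - sx2 z / K2 p (su2 z))))).
  { apply bigO_ext_all with (g := fun z => e p * (sx1 z * aa p (su1 z) (su2 z) * / (1 + h p * aa p (su1 z) (su2 z) * sx1 z) - x1s * a0 p * qs) - r2 p * (sx2 z * / K2 p (su2 z) - x2s * / K02 p)).
    { intros z. assert (E : (e p * aa p (su1 z) (su2 z) * sx1 z / (1 + h p * aa p (su1 z) (su2 z) * sx1 z) - d p + r2 p * (1 - sx2 z / K2 p (su2 z))) - (e p * (sx1 z * aa p (su1 z) (su2 z) * / (1 + h p * aa p (su1 z) (su2 z) * sx1 z) - x1s * a0 p * qs) - r2 p * (sx2 z * / K2 p (su2 z) - x2s * / K02 p))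
          = e p * a0 p * x1s * qs - d p + r2 p - r2 p * x2s * / K02 p) by (unfold Rdiv; ring). lra. }
    apply bigO_minus; apply (bigO_mult c 0 1); auto; apply bigO_const. }
  assert (NN := near_and c _ _ NB NB0).
  assert (D1o : bigO c 2 (fun z => (r1 p * (1 - sx1 z / K1 p (su1 z)) - aa p (su1 z) (su2 z) * sx2 z / (1 + h p * aa p (su1 z) (su2 z) * sx1 z)) - ((- r1 p / K01 p + h p * a0 p ^ 2 * x2s * qs ^ 2) * (sx1 z - x1s) - a0 p * qs * (sx2 z - x2s)))).
  { apply bigO_ext with (g := fun z => - r1 p * sx1 z * (/ K1 p (su1 z) - / K01 p) - sx2 z * (aa p (su1 z) (su2 z) - a0 p) * / (1 + h p * aa p (su1 z) (su2 z) * sx1 z) * / (1 + h p * a0 p * sx1 z)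
        - a0 p * ((sx2 z - x2s) * (/ (1 + h p * a0 p * sx1 z) - qs) + x2s * h p * a0 p * (sx1 z - x1s) * qs * (qs - / (1 + h p * a0 p * sx1 z)))).
    { eapply near_mono; [|exact NN]. cbv beta. intros z [Hb Hb0].
      assert (E : (r1 p * (1 - sx1 z / K1 p (su1 z)) - aa p (su1 z) (su2 z) * sx2 z / (1 + h p * aa p (su1 z) (su2 z) * sx1 z)) - ((- r1 p / K01 p + h p * a0 p ^ 2 * x2s * qs ^ 2) * (sx1 z - x1s) - a0 p * qs * (sx2 z - x2s)) - (- r1 p * sx1 z * (/ K1 p (su1 z) - / K01 p) - sx2 z * (aa p (su1 z) (su2 z) - a0 p) * / (1 + h p * aa p (su1 z) (su2 z) * sx1 z) * / (1 + h p * a0 p * sx1 z)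
        - a0 p * ((sx2 z - x2s) * (/ (1 + h p * a0 p * sx1 z) - qs) + x2s * h p * a0 p * (sx1 z - x1s) * qs * (qs - / (1 + h p * a0 p * sx1 z))))
          = r1 p - r1 p * x1s * / K01 p - a0 p * x2s * qs).
      { unfold qs, Bs in *. unfold Rdiv. set (iK := / K1 p (su1 z)). field. repeat split; lra. }
      lra. }
    solveO. }
  assert (D2o : bigO c 2 (fun z => (e p * aa p (su1 z) (su2 z) * sx1 z / (1 + h p * aa p (su1 z) (su2 z) * sx1 z) - d p + r2 p * (1 - sx2 z / K2 p (su2 z))) - (e p * a0 p * qs ^ 2 * (sx1 z - x1s) - r2 p / K02 p * (sx2 z - x2s)))).
  { apply bigO_ext with (g := fun z => e p * (sx1 z * (aa p (su1 z) (su2 z) - a0 p) * / (1 + h p * aa p (su1 z) (su2 z) * sx1 z) * / (1 + h p * a0 p * sx1 z) + a0 p * (sx1 z - x1s) * qs * (/ (1 + h p * a0 p * sx1 z) - qs))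
        - r2 p * sx2 z * (/ K2 p (su2 z) - / K02 p)).
    { eapply near_mono; [|exact NN]. cbv beta. intros z [Hb Hb0].
      assert (E : (e p * aa p (su1 z) (su2 z) * sx1 z / (1 + h p * aa p (su1 z) (su2 z) * sx1 z) - d p + r2 p * (1 - sx2 z / K2 p (su2 z))) - (e p * a0 p * qs ^ 2 * (sx1 z - x1s) - r2 p / K02 p * (sx2 z - x2s)) - (e p * (sx1 z * (aa p (su1 z) (su2 z) - a0 p) * / (1 + h p * aa p (su1 z) (su2 z) * sx1 z) * / (1 + h p * a0 p * sx1 z) + a0 p * (sx1 z - x1s) * qs * (/ (1 + h p * a0 p * sx1 z) - qs))
        - r2 p * sx2 z * (/ K2 p (su2 z) - / K02 p))
          = e p * a0 p * x1s * qs - d p + r2 p - r2 p * x2s * / K02 p).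
      { unfold qs, Bs in *. unfold Rdiv. set (iK := / K2 p (su2 z)). field. repeat split; lra. }
      lra. }
    solveO. }
  set (j11 := x1s * (- r1 p / K01 p + h p * a0 p ^ 2 * x2s * qs ^ 2)).
  set (j12 := - x1s * a0 p * qs).
  set (j21 := x2s * e p * a0 p * qs ^ 2).
  set (j22 := - x2s * r2 p / K02 p).
  set (m11 := s1 p ^ 2 * (- (r1 p * x1s / (sK1 p ^ 2 * K01 p)) + x2s * a0 p * qs ^ 2 / sa p ^ 2)).
  set (m12 := - s1 p ^ 2 * x2s * a0 p * qs ^ 2 / sa p ^ 2).
  set (m21 := s2 p ^ 2 * e p * x1s * a0 p * qs ^ 2 / sa p ^ 2).
  set (m22 := s2 p ^ 2 * (- (r2 p * x2s / (sK2 p ^ 2 * K02 p)) - e p * x1s * a0 p * qs ^ 2 / sa p ^ 2)).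
  assert (Hq2 : 0 < qs ^ 2) by (apply pow_lt; lra).
  assert (Hs1' : 0 < s1 p ^ 2) by (apply pow_lt; lra).
  assert (Hs2' : 0 < s2 p ^ 2) by (apply pow_lt; lra).
  assert (Hsa' : 0 < / sa p ^ 2) by (apply Rinv_0_lt_compat, pow_lt; lra).
  assert (Hj11 : j11 < 0) by (unfold j11; nra).
  assert (Hj12 : j12 < 0) by (unfold j12; assert (0 < x1s * a0 p * qs) by (repeat apply Rmult_lt_0_compat; lra); lra).
  assert (Hj21 : 0 < j21) by (unfold j21; repeat apply Rmult_lt_0_compat; lra).
  assert (Hj22 : j22 < 0) by (unfold j22; unfold Rdiv; assert (0 < x2s * r2 p * / K02 p) by (repeat apply Rmult_lt_0_compat; try apply Rinv_0_lt_compat; lra); lra).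
  assert (Hm11 : m11 < 0) by (unfold m11; nra).
  assert (Hm12 : m12 < 0) by (unfold m12; unfold Rdiv; assert (0 < s1 p ^ 2 * x2s * a0 p * qs ^ 2 * / sa p ^ 2) by (repeat apply Rmult_lt_0_compat; lra); lra).
  assert (Hm21 : 0 < m21) by (unfold m21; unfold Rdiv; repeat apply Rmult_lt_0_compat; lra).
  assert (Hm22 : m22 < 0).
  { unfold m22. unfold Rdiv.
    assert (0 < r2 p * x2s * / (sK2 p ^ 2 * K02 p)) by (repeat apply Rmult_lt_0_compat; try apply Rinv_0_lt_compat; try apply Rmult_lt_0_compat; try apply pow_lt; lra).
    assert (0 < e p * x1s * a0 p * qs ^ 2 * / sa p ^ 2) by (repeat apply Rmult_lt_0_compat; lra). nra. }
  apply (stable_from p c j21 (- j12) m21 (- m12)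
     (Rmin (Rmin (-2 * j21 * j11) (2 * j12 * j22)) (Rmin (-2 * m21 * m11) (2 * m12 * m22)))
     (fun z => j11 * (sx1 z - x1s) + j12 * (sx2 z - x2s))
     (fun z => j21 * (sx1 z - x1s) + j22 * (sx2 z - x2s))
     (fun z => m11 * su1 z + m12 * su2 z)
     (fun z => m21 * su1 z + m22 * su2 z)); try lra.
  - repeat apply Rmin_glb_lt; nra.
  - intros z. unfold SS. simpl.
    replace (su1 z - 0) with (su1 z) by ring. replace (su2 z - 0) with (su2 z) by ring.
    apply quad_ii; auto.
  -
    apply bigO_ext_all with (g := fun z => (sx1 z - x1s) * (r1 p * (1 - sx1 z / K1 p (su1 z)) - aa p (su1 z) (su2 z) * sx2 z / (1 + h p * aa p (su1 z) (su2 z) * sx1 z)) + x1s * ((r1 p * (1 - sx1 z / K1 p (su1 z)) - aa p (su1 z) (su2 z) * sx2 z / (1 + h p * aa p (su1 z) (su2 z) * sx1 z)) - ((- r1 p / K01 p + h p * a0 p ^ 2 * x2s * qs ^ 2) * (sx1 z - x1s) - a0 p * qs * (sx2 z - x2s)))).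
    { intros z. unfold F, c. cbn beta iota zeta delta [sx1 sx2 su1 su2]. unfold j11, j12. ring. }
    apply bigO_plus. apply (bigO_mult c 1 1); auto. apply (bigO_mult c 0 2); auto. apply bigO_const.
  -
    apply bigO_ext_all with (g := fun z => (sx2 z - x2s) * (e p * aa p (su1 z) (su2 z) * sx1 z / (1 + h p * aa p (su1 z) (su2 z) * sx1 z) - d p + r2 p * (1 - sx2 z / K2 p (su2 z))) + x2s * ((e p * aa p (su1 z) (su2 z) * sx1 z / (1 + h p * aa p (su1 z) (su2 z) * sx1 z) - d p + r2 p * (1 - sx2 z / K2 p (su2 z))) - (e p * a0 p * qs ^ 2 * (sx1 z - x1s) - r2 p / K02 p * (sx2 z - x2s)))).
    { intros z. unfold F, c. cbn beta iota zeta delta [sx1 sx2 su1 su2]. unfold j21, j22. unfold Rdiv. ring. }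
    apply bigO_plus. apply (bigO_mult c 1 1); auto. apply (bigO_mult c 0 2); auto. apply bigO_const.
  -
    apply bigO_ext_all with (g := fun z => s1 p ^ 2 * (- (r1 p / sK1 p ^ 2) * su1 z * (sx1 z * / K1 p (su1 z) - x1s * / K01 p)
       + / sa p ^ 2 * (su1 z - su2 z) * (sx2 z * aa p (su1 z) (su2 z) * (/ (1 + h p * aa p (su1 z) (su2 z) * sx1 z) * / (1 + h p * aa p (su1 z) (su2 z) * sx1 z)) - x2s * a0 p * (qs * qs)))).
    { intros z. unfold F, c. cbn beta iota zeta delta [sx1 sx2 su1 su2]. unfold Rdiv. rewrite !Rinv_mult, <- !pow_inv.
      set (iK := / K1 p (su1 z)). set (iB := / (1 + h p * aa p (su1 z) (su2 z) * sx1 z)).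
      unfold m11, m12. unfold Rdiv. rewrite !Rinv_mult. field. repeat split; lra. }
    apply (bigO_mult c 0 2); [apply bigO_const|]. apply bigO_plus.
    + apply (bigO_mult c 1 1); auto. apply (bigO_mult c 0 1); auto. apply bigO_const.
    + apply (bigO_mult c 1 1); auto. apply (bigO_mult c 0 1); [apply bigO_const|]. apply bigO_minus; auto.
  -
    apply bigO_ext_all with (g := fun z => s2 p ^ 2 * (- (r2 p / sK2 p ^ 2) * su2 z * (sx2 z * / K2 p (su2 z) - x2s * / K02 p)
       + e p / sa p ^ 2 * (su1 z - su2 z) * (sx1 z * aa p (su1 z) (su2 z) * (/ (1 + h p * aa p (su1 z) (su2 z) * sx1 z) * / (1 + h p * aa p (su1 z) (su2 z) * sx1 z)) - x1s * a0 p * (qs * qs)))).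
    { intros z. unfold F, c. cbn beta iota zeta delta [sx1 sx2 su1 su2]. unfold Rdiv. rewrite !Rinv_mult, <- !pow_inv.
      set (iK := / K2 p (su2 z)). set (iB := / (1 + h p * aa p (su1 z) (su2 z) * sx1 z)).
      unfold m21, m22. unfold Rdiv. rewrite !Rinv_mult. field. repeat split; lra. }
    apply (bigO_mult c 0 2); [apply bigO_const|]. apply bigO_plus.
    + apply (bigO_mult c 1 1); auto. apply (bigO_mult c 0 1); auto. apply bigO_const.
    + apply (bigO_mult c 1 1); auto. apply (bigO_mult c 0 1); [apply bigO_const|]. apply bigO_minus; auto.
Qed.

Lemma exp_le1 x : x <= 0 -> exp x <= 1.
Proof. intros H. rewrite <- exp_0. destruct (Req_dec x 0) as [->|]; [lra|]. left; apply exp_increasing; lra. Qed.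

Lemma K1_pos p v : 0 < K01 p -> 0 < K1 p v.
Proof. intros. unfold K1. apply Rmult_lt_0_compat; auto. apply exp_pos. Qed.
Lemma K2_pos p v : 0 < K02 p -> 0 < K2 p v.
Proof. intros. unfold K2. apply Rmult_lt_0_compat; auto. apply exp_pos. Qed.
Lemma aa_pos p u v : 0 < a0 p -> 0 < aa p u v.
Proof. intros. unfold aa. apply Rmult_lt_0_compat; auto. apply exp_pos. Qed.

Lemma nonpos_div (a b : R) : 0 < b -> - (a ^ 2) / b <= 0.
Proof. intros. unfold Rdiv. pose proof (pow2_ge_0 a). pose proof (Rinv_0_lt_compat b H). nra. Qed.

Lemma K1_le p v : 0 < K01 p -> 0 < sK1 p -> K1 p v <= K01 p.
Proof.
  intros. unfold K1. pose proof (exp_le1 _ (nonpos_div v (2 * sK1 p ^ 2) ltac:(pose proof (pow_lt _ 2 H0); lra))). nra.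
Qed.
Lemma K2_le p v : 0 < K02 p -> 0 < sK2 p -> K2 p v <= K02 p.
Proof.
  intros. unfold K2. pose proof (exp_le1 _ (nonpos_div v (2 * sK2 p ^ 2) ltac:(pose proof (pow_lt _ 2 H0); lra))). nra.
Qed.
Lemma aa_le p u v : 0 < a0 p -> 0 < sa p -> aa p u v <= a0 p.
Proof.
  intros. unfold aa. pose proof (exp_le1 _ (nonpos_div (u - v) (2 * sa p ^ 2) ltac:(pose proof (pow_lt _ 2 H0); lra))). nra.
Qed.
Lemma K1_0 p : K1 p 0 = K01 p.
Proof. unfold K1. replace (- 0 ^ 2 / (2 * sK1 p ^ 2)) with 0 by (unfold Rdiv; ring). rewrite exp_0. ring. Qed.
Lemma K2_0 p : K2 p 0 = K02 p.
Proof. unfold K2. replace (- 0 ^ 2 / (2 * sK2 p ^ 2)) with 0 by (unfold Rdiv; ring). rewrite exp_0. ring. Qed.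
Lemma aa_eq p u : aa p u u = a0 p.
Proof. unfold aa. replace (- (u - u) ^ 2 / (2 * sa p ^ 2)) with 0 by (unfold Rdiv; ring). rewrite exp_0. ring. Qed.

Lemma K1_lt p v w : 0 < K01 p -> 0 < sK1 p -> v ^ 2 < w ^ 2 -> K1 p w < K1 p v.
Proof.
  intros. unfold K1. apply Rmult_lt_compat_l; auto. apply exp_increasing.
  pose proof (pow_lt _ 2 H0). unfold Rdiv. apply Rmult_lt_compat_r.
  apply Rinv_0_lt_compat. lra. lra.
Qed.

Lemma mono_frac (hh x y : R) : 0 < hh -> 0 <= x -> x <= y -> x / (1 + hh * x) <= y / (1 + hh * y).
Proof.
  intros. assert (0 < 1 + hh * x) by nra. assert (0 < 1 + hh * y) by nra.
  apply Rmult_le_reg_r with ((1 + hh * x) * (1 + hh * y)). nra.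
  field_simplify; try lra; try nra.
Qed.
Lemma mono_frac_lt (hh x y : R) : 0 < hh -> 0 <= x -> x < y -> x / (1 + hh * x) < y / (1 + hh * y).
Proof.
  intros. assert (0 < 1 + hh * x) by nra. assert (0 < 1 + hh * y) by nra.
  apply Rmult_lt_reg_r with ((1 + hh * x) * (1 + hh * y)). nra.
  field_simplify; try lra; try nra.
Qed.

Lemma eq_comps p s : equilibrium p s ->
  sx1 (F p s) = 0 /\ sx2 (F p s) = 0 /\ su1 (F p s) = 0 /\ su2 (F p s) = 0.
Proof. unfold equilibrium. intros H. rewrite H. simpl. auto. Qed.

Ltac pos_facts p :=
  idtac.

Lemma div_eq0 a b : a / b = 0 -> b <> 0 -> a = 0.
Proof. intros H Hb. unfold Rdiv in H. apply Rmult_integral in H as [H|H]; auto.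
  exfalso. apply (Rinv_neq_0_compat b Hb H). Qed.

Lemma eq_x2zero (p : params) x1 u1 u2
  (HK01 : 0 < K01 p) (HsK1 : 0 < sK1 p) (HsK2 : 0 < sK2 p) (HK02 : 0 < K02 p)
  (Ha0 : 0 < a0 p) (Hsa : 0 < sa p) (Hr1 : 0 < r1 p) (Hh : 0 < h p) (He : 0 < e p)
  (Hs1 : 0 < s1 p) (Hs2 : 0 < s2 p) :
  0 < x1 -> equilibrium p (mkState x1 0 u1 u2) -> x1 = K01 p /\ u1 = 0 /\ u2 = 0.
Proof.
  intros Hx H. destruct (eq_comps _ _ H) as [E1 [_ [E3 E4]]].
  unfold F in E1, E3, E4. cbn beta iota zeta delta [sx1 sx2 su1 su2] in E1, E3, E4.
  pose proof (K1_pos p u1 HK01). pose proof (aa_pos p u1 u2 Ha0).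
  assert (B : 0 < 1 + h p * aa p u1 u2 * x1) by (pose proof (Rmult_lt_0_compat _ _ (Rmult_lt_0_compat _ _ Hh H1) Hx); lra).
  assert (X : x1 = K1 p u1).
  { apply Rmult_integral in E1 as [E1|E1]; [lra|].
    replace (aa p u1 u2 * 0 / (1 + h p * aa p u1 u2 * x1)) with 0 in E1 by (unfold Rdiv; ring).
    assert (1 - x1 / K1 p u1 = 0) by nra. unfold Rdiv in H2.
    apply (Rmult_eq_reg_r (/ K1 p u1)). rewrite Rinv_r; lra. apply Rinv_neq_0_compat; lra. }
  assert (U1 : u1 = 0).
  { apply Rmult_integral in E3 as [E3|E3]; [pose proof (pow_lt _ 2 Hs1); lra|].
    replace ((u1 - u2) * 0 * aa p u1 u2 / (sa p ^ 2 * (1 + h p * aa p u1 u2 * x1) ^ 2)) with 0 in E3 by (unfold Rdiv; ring).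
    rewrite Rplus_0_r in E3. apply div_eq0 in E3.
    2:{ pose proof (pow_lt _ 2 HsK1). apply Rgt_not_eq. apply Rmult_lt_0_compat; lra. }
    assert (r1 p * x1 * u1 = 0) by lra. apply Rmult_integral in H2 as [H2|H2]; auto.
    apply Rmult_integral in H2 as [H2|H2]; lra. }
  subst u1. rewrite K1_0 in X. split; auto. split; auto.
  apply Rmult_integral in E4 as [E4|E4]; [pose proof (pow_lt _ 2 Hs2); lra|].
  replace (- (r2 p * 0 * u2) / (sK2 p ^ 2 * K2 p u2)) with 0 in E4 by (unfold Rdiv; ring).
  rewrite Rplus_0_l in E4. apply div_eq0 in E4.
  2:{ pose proof (pow_lt _ 2 Hsa). apply Rgt_not_eq. apply Rmult_lt_0_compat; [lra|]. apply pow_lt; lra. }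
  assert (e p * (0 - u2) * x1 * aa p 0 u2 = 0) by lra.
  apply Rmult_integral in H2 as [H2|H2]; [|lra].
  apply Rmult_integral in H2 as [H2|H2]; [|lra].
  apply Rmult_integral in H2 as [H2|H2]; lra.
Qed.

Lemma mono_frac3 (hh A X A' X' : R) : 0 < hh -> 0 <= A -> A <= A' -> 0 <= X -> X <= X' ->
  A * X / (1 + hh * A * X) <= A' * X' / (1 + hh * A' * X').
Proof.
  intros. replace (1 + hh * A * X) with (1 + hh * (A * X)) by ring.
  replace (1 + hh * A' * X') with (1 + hh * (A' * X')) by ring.
  apply mono_frac; nra.
Qed.
Lemma mono_frac3_lt (hh A X A' X' : R) : 0 < hh -> 0 <= A -> A <= A' -> 0 <= X -> X < X' -> 0 < A ->
  A * X / (1 + hh * A * X) < A' * X' / (1 + hh * A' * X').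
Proof.
  intros. replace (1 + hh * A * X) with (1 + hh * (A * X)) by ring.
  replace (1 + hh * A' * X') with (1 + hh * (A' * X')) by ring.
  apply mono_frac_lt; nra.
Qed.

Lemma part_i (p : params)
  (HK01 : 0 < K01 p) (HK02 : 0 < K02 p) (HsK1 : 0 < sK1 p) (HsK2 : 0 < sK2 p)
  (Ha0 : 0 < a0 p) (Hsa : 0 < sa p)
  (Hr1 : 0 < r1 p) (Hr2 : 0 < r2 p) (Hh : 0 < h p) (He : 0 < e p)
  (Hs1 : 0 < s1 p) (Hs2 : 0 < s2 p) (Hd : 0 <= d p) :
  r2 p + e p * a0 p * K01 p / (1 + a0 p * h p * K01 p) < d p ->
  unique_ESS p (mkState (K01 p) 0 0 0).
Proof.
  intros Hi.
  replace (1 + a0 p * h p * K01 p) with (1 + h p * a0 p * K01 p) in Hi by ring.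
  assert (HB : 0 < 1 + h p * a0 p * K01 p).
  { pose proof (Rmult_lt_0_compat _ _ (Rmult_lt_0_compat _ _ Hh Ha0) HK01). lra. }
  assert (Hfr : 0 < e p * a0 p * K01 p / (1 + h p * a0 p * K01 p)).
  { apply Rdiv_lt_0_compat; auto. repeat apply Rmult_lt_0_compat; auto. }
  split.
  -
    unfold isESS. split; [simpl; lra|]. split; [simpl; lra|]. split.
    { unfold equilibrium, F. cbn beta iota zeta delta [sx1 sx2 su1 su2]. rewrite K1_0, K2_0.
      rewrite aa_eq. f_equal; unfold Rdiv; field; repeat split; try lra; try (apply pow_nonzero; lra). }
    split.
    { apply stable_i; auto. unfold Rdiv in Hi. lra. }
    split.
    { simpl. intros [_ H]. lra. }
    intros _. simpl. unfold G1, G2. simpl. rewrite K1_0, K2_0.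
    split; split.
    + intros v. pose proof (K1_pos p v HK01). pose proof (K1_le p v HK01 HsK1).
      assert (K01 p / K1 p v >= 1).
      { apply Rle_ge. apply Rmult_le_reg_r with (K1 p v); auto. unfold Rdiv.
        rewrite Rmult_assoc, Rinv_l by lra. lra. }
      replace (K01 p / K01 p) with 1 by (field; lra).
      unfold Rdiv. rewrite !Rmult_0_r, !Rmult_0_l. nra.
    + replace (K01 p / K01 p) with 1 by (field; lra). unfold Rdiv. rewrite !Rmult_0_r, !Rmult_0_l. lra.
    + intros v. rewrite aa_eq. unfold Rdiv. rewrite !Rmult_0_l.
      pose proof (aa_pos p 0 v Ha0). pose proof (aa_le p 0 v Ha0 Hsa).
      pose proof (mono_frac3 (h p) (aa p 0 v) (K01 p) (a0 p) (K01 p) Hh ltac:(lra) ltac:(lra) ltac:(lra) ltac:(lra)).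
      unfold Rdiv in H1.
      replace (e p * aa p 0 v * K01 p * / (1 + h p * aa p 0 v * K01 p)) with (e p * (aa p 0 v * K01 p * / (1 + h p * aa p 0 v * K01 p))) by ring.
      replace (e p * a0 p * K01 p * / (1 + h p * a0 p * K01 p)) with (e p * (a0 p * K01 p * / (1 + h p * a0 p * K01 p))) by ring.
      nra.
    + rewrite aa_eq. unfold Rdiv in *. rewrite !Rmult_0_l. lra.
  -
    intros [x1 x2 u1 u2] [Hx1 [Hx2 [Heq [_ [Hint Hbd]]]]]. simpl in Hx1, Hx2, Hint, Hbd.
    destruct (Req_dec x1 0) as [Z1|N1].
    + subst x1. destruct (Hbd ltac:(ring)) as [[_ G1le] _]. unfold G1 in G1le. simpl in G1le.
      destruct (Req_dec x2 0) as [Z2|N2].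
      * subst x2. unfold Rdiv in G1le. rewrite !Rmult_0_l, Rmult_0_r in G1le. lra.
      * exfalso. destruct (eq_comps _ _ Heq) as [_ [E2 _]].
        unfold F in E2. cbn beta iota zeta delta [sx1 sx2 su1 su2] in E2.
        apply Rmult_integral in E2 as [E2|E2]; [lra|].
        pose proof (K2_pos p u2 HK02).
        assert (0 < x2 / K2 p u2) by (apply Rdiv_lt_0_compat; lra).
        unfold Rdiv in E2 at 1. rewrite !Rmult_0_r, Rmult_0_l in E2. unfold Rdiv in *. nra.
    + destruct (Req_dec x2 0) as [Z2|N2].
      * subst x2. destruct (eq_x2zero p x1 u1 u2) as [-> [-> ->]]; auto; lra.
      * exfalso. destruct (eq_comps _ _ Heq) as [E1 [E2 _]].
        unfold F in E1, E2. cbn beta iota zeta delta [sx1 sx2 su1 su2] in E1, E2.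
        apply Rmult_integral in E1 as [E1|E1]; [lra|].
        apply Rmult_integral in E2 as [E2|E2]; [lra|].
        pose proof (aa_pos p u1 u2 Ha0). pose proof (aa_le p u1 u2 Ha0 Hsa).
        pose proof (K1_pos p u1 HK01). pose proof (K1_le p u1 HK01 HsK1).
        pose proof (K2_pos p u2 HK02).
        assert (Bp : 0 < 1 + h p * aa p u1 u2 * x1) by (pose proof (Rmult_lt_0_compat (h p * aa p u1 u2) x1 (Rmult_lt_0_compat _ _ Hh H) ltac:(lra)); lra).
        assert (0 < aa p u1 u2 * x2 / (1 + h p * aa p u1 u2 * x1)) by (apply Rdiv_lt_0_compat; auto; apply Rmult_lt_0_compat; lra).
        assert (Hlt : x1 < K01 p).
        { assert (Hq : x1 / K1 p u1 < 1) by nra.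
          assert (x1 < K1 p u1); [|lra].
          apply Rmult_lt_reg_r with (/ K1 p u1). apply Rinv_0_lt_compat; lra.
          rewrite Rinv_r by lra. exact Hq. }
        pose proof (mono_frac3 (h p) (aa p u1 u2) x1 (a0 p) (K01 p) Hh ltac:(lra) ltac:(lra) ltac:(lra) ltac:(lra)) as Hm.
        unfold Rdiv in Hm, E2, Hi.
        replace (e p * aa p u1 u2 * x1 * / (1 + h p * aa p u1 u2 * x1)) with (e p * (aa p u1 u2 * x1 * / (1 + h p * aa p u1 u2 * x1))) in E2 by ring.
        replace (e p * a0 p * K01 p * / (1 + h p * a0 p * K01 p)) with (e p * (a0 p * K01 p * / (1 + h p * a0 p * K01 p))) in Hi by ring.
        assert (0 < x2 / K2 p u2) by (apply Rdiv_lt_0_compat; lra).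
        nra.
Qed.

Lemma bracket (hh A a x y : R) : 0 < hh -> 0 < A -> A <= a -> 0 < x -> 0 < y ->
  a * y / (1 + hh * a * x) - A * y / (1 + hh * A * x) <= y * (a - A).
Proof.
  intros. assert (P1 : 1 <= 1 + hh * a * x) by (pose proof (Rmult_lt_0_compat _ _ (Rmult_lt_0_compat _ _ H H0) H2); nra).
  assert (P2 : 1 <= 1 + hh * A * x) by (pose proof (Rmult_lt_0_compat _ _ (Rmult_lt_0_compat _ _ H H0) H2); nra).
  replace (a * y / (1 + hh * a * x) - A * y / (1 + hh * A * x)) with
    (y * (a - A) / ((1 + hh * a * x) * (1 + hh * A * x))) by (field; lra).
  assert (1 <= (1 + hh * a * x) * (1 + hh * A * x)) by nra.
  assert (0 <= y * (a - A)) by nra.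
  apply Rmult_le_reg_r with ((1 + hh * a * x) * (1 + hh * A * x)); [lra|].
  unfold Rdiv. rewrite Rmult_assoc, Rinv_l by lra. nra.
Qed.

Lemma iK1_ge p v : 0 < K01 p -> 0 < sK1 p ->
  / K01 p * (1 + v ^ 2 / (2 * sK1 p ^ 2)) <= / K1 p v.
Proof.
  intros. unfold K1. rewrite Rinv_mult, <- exp_Ropp.
  replace (- (- v ^ 2 / (2 * sK1 p ^ 2))) with (v ^ 2 / (2 * sK1 p ^ 2)) by (unfold Rdiv; ring).
  apply Rmult_le_compat_l. left; apply Rinv_0_lt_compat; auto. apply exp_ineq1_le.
Qed.

Lemma aa_ge p v : 0 < a0 p -> a0 p * (1 - v ^ 2 / (2 * sa p ^ 2)) <= aa p v 0.
Proof.
  intros. unfold aa. replace (v - 0) with v by ring.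
  replace (1 - v ^ 2 / (2 * sa p ^ 2)) with (1 + (- v ^ 2 / (2 * sa p ^ 2))) by (unfold Rdiv; ring).
  apply Rmult_le_compat_l; [lra|]. apply exp_ineq1_le.
Qed.

Lemma G1_max (p : params) x1s x2s v
  (HK01 : 0 < K01 p) (HsK1 : 0 < sK1 p) (Ha0 : 0 < a0 p) (Hsa : 0 < sa p)
  (Hr1 : 0 < r1 p) (Hh : 0 < h p) (Hx1 : 0 < x1s) (Hx2 : 0 < x2s)
  (HG : r1 p * (1 - x1s / K01 p) - a0 p * x2s / (1 + h p * a0 p * x1s) = 0)
  (Hkey : x2s * a0 p / sa p ^ 2 < r1 p * x1s / (sK1 p ^ 2 * K01 p)) :
  r1 p * (1 - x1s / K1 p v) - aa p v 0 * x2s / (1 + h p * aa p v 0 * x1s) <= 0.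
Proof.
  pose proof (iK1_ge p v HK01 HsK1) as I1. pose proof (aa_ge p v Ha0) as I2.
  pose proof (aa_pos p v 0 Ha0). pose proof (aa_le p v 0 Ha0 Hsa).
  pose proof (bracket (h p) (aa p v 0) (a0 p) x1s x2s Hh H H0 Hx1 Hx2) as Br.
  set (A := aa p v 0) in *. set (w := v ^ 2) in *.
  assert (Hw : 0 <= w) by (unfold w; apply pow2_ge_0).
  assert (Hs1 : 0 < sK1 p ^ 2) by (apply pow_lt; lra).
  assert (Hs2 : 0 < sa p ^ 2) by (apply pow_lt; lra).
  assert (T1 : r1 p * x1s / K1 p v >= r1 p * x1s / K01 p + w / 2 * (r1 p * x1s / (sK1 p ^ 2 * K01 p))).
  { unfold Rdiv in *. apply Rle_ge.
    replace (r1 p * x1s * / K01 p + w * / 2 * (r1 p * x1s * / (sK1 p ^ 2 * K01 p))) with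
       (r1 p * x1s * (/ K01 p * (1 + w * / (2 * sK1 p ^ 2)))) by (field; lra).
    apply Rmult_le_compat_l; [nra|exact I1]. }
  assert (T2 : a0 p - A <= w / 2 * (a0 p / sa p ^ 2)).
  { unfold Rdiv in *. replace (w * / 2 * (a0 p * / sa p ^ 2)) with (a0 p - a0 p * (1 - w * / (2 * sa p ^ 2))) by (field; lra). lra. }
  assert (T3 : w / 2 * (x2s * a0 p / sa p ^ 2) <= w / 2 * (r1 p * x1s / (sK1 p ^ 2 * K01 p))).
  { apply Rmult_le_compat_l; lra. }
  assert (T4 : x2s * (a0 p - A) <= w / 2 * (x2s * a0 p / sa p ^ 2)).
  { replace (w / 2 * (x2s * a0 p / sa p ^ 2)) with (x2s * (w / 2 * (a0 p / sa p ^ 2))) by (unfold Rdiv; ring).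
    apply Rmult_le_compat_l; lra. }
  replace (r1 p * (1 - x1s / K1 p v)) with (r1 p - r1 p * x1s / K1 p v) by (unfold Rdiv; ring).
  replace (r1 p * (1 - x1s / K01 p)) with (r1 p - r1 p * x1s / K01 p) in HG by (unfold Rdiv; ring).
  lra.
Qed.

Lemma int_lt (r1 K a hh e d r2 K2 x1 x2 y1 y2 : R) :
  0 < r1 -> 0 < K -> 0 < a -> 0 < hh -> 0 < e -> 0 < r2 -> 0 < K2 -> hh * a * K < 1 ->
  0 < x1 -> x1 < y1 ->
  r1 * (1 - x1 / K) - a * x2 / (1 + hh * a * x1) = 0 ->
  r1 * (1 - y1 / K) - a * y2 / (1 + hh * a * y1) = 0 ->
  e * a * x1 / (1 + hh * a * x1) - d + r2 * (1 - x2 / K2) = 0 ->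
  e * a * y1 / (1 + hh * a * y1) - d + r2 * (1 - y2 / K2) = 0 -> False.
Proof.
  intros. assert (B1 : 0 < 1 + hh * a * x1) by (pose proof (Rmult_lt_0_compat _ _ (Rmult_lt_0_compat _ _ H2 H1) H7); lra).
  assert (B2 : 0 < 1 + hh * a * y1) by (pose proof (Rmult_lt_0_compat (hh * a) y1 (Rmult_lt_0_compat _ _ H2 H1) ltac:(lra)); lra).
  assert (PX : a * x2 = r1 * (1 - x1 / K) * (1 + hh * a * x1)).
  { assert (a * x2 / (1 + hh * a * x1) = r1 * (1 - x1 / K)) by lra.
    rewrite <- H13. field. lra. }
  assert (PY : a * y2 = r1 * (1 - y1 / K) * (1 + hh * a * y1)).
  { assert (a * y2 / (1 + hh * a * y1) = r1 * (1 - y1 / K)) by lra.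
    rewrite <- H13. field. lra. }
  assert (D : r1 * (1 - x1 / K) * (1 + hh * a * x1) - r1 * (1 - y1 / K) * (1 + hh * a * y1)
     = r1 * (y1 - x1) * (1 + hh * a * (x1 + y1) - hh * a * K) / K) by (field; lra).
  assert (0 < r1 * (y1 - x1) * (1 + hh * a * (x1 + y1) - hh * a * K) / K).
  { apply Rdiv_lt_0_compat; auto. apply Rmult_lt_0_compat. nra.
    assert (0 < hh * a * (x1 + y1)) by (apply Rmult_lt_0_compat; nra). lra. }
  assert (Hxy : y2 < x2) by nra.
  pose proof (mono_frac3_lt hh a x1 a y1 H2 ltac:(lra) ltac:(lra) ltac:(lra) H8 H1) as M.
  assert (E1 : r2 * x2 / K2 = e * (a * x1 / (1 + hh * a * x1)) - d + r2) by (unfold Rdiv in *; lra).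
  assert (E2 : r2 * y2 / K2 = e * (a * y1 / (1 + hh * a * y1)) - d + r2) by (unfold Rdiv in *; lra).
  assert (r2 * x2 / K2 < r2 * y2 / K2) by (rewrite E1, E2; nra).
  unfold Rdiv in H14. apply Rmult_lt_reg_r in H14; [|apply Rinv_0_lt_compat; lra]. nra.
Qed.

Lemma part_ii (p : params)
  (HK01 : 0 < K01 p) (HK02 : 0 < K02 p) (HsK1 : 0 < sK1 p) (HsK2 : 0 < sK2 p)
  (Ha0 : 0 < a0 p) (Hsa : 0 < sa p)
  (Hr1 : 0 < r1 p) (Hr2 : 0 < r2 p) (Hh : 0 < h p) (He : 0 < e p)
  (Hs1 : 0 < s1 p) (Hs2 : 0 < s2 p) (Hd : 0 <= d p) :
  (sK2 p > sK1 p ->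
   forall x1s x2s : R, 0 < x1s -> 0 < x2s ->
     equilibrium p (mkState x1s x2s 0 0) ->
     K02 p * a0 p < r1 p / (1 - d p / r2 p) ->
     K01 p * a0 p < 1 / h p ->
     Rmin (2 * r2 p / K02 p) (r1 p / (sK1 p ^ 2 * K01 p)) > a0 p ->
     r1 p * r2 p / (K01 p * K02 p) + e p * a0 p ^ 2 / (1 + a0 p * h p * K01 p) ^ 3
       > a0 p ^ 2 * h p * K02 p * (r2 p + e p / h p) ->
     sK2 p / sK1 p * sqrt (r1 p * e p * K02 p / (r2 p * K01 p)) > x2s / x1s ->
     sa p ^ 2 / (sK1 p * sK2 p) > sqrt (e p * K01 p * K02 p / (r1 p * r2 p)) * a0 p ->
     unique_ESS p (mkState x1s x2s 0 0)).
Proof.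
  intros _ x1s x2s Hx1 Hx2 Heq H1 H2 _ _ H5 H6.
  assert (HB : 0 < 1 + h p * a0 p * x1s).
  { pose proof (Rmult_lt_0_compat _ _ (Rmult_lt_0_compat _ _ Hh Ha0) Hx1). lra. }
  destruct (eq_comps _ _ Heq) as [E1 [E2 _]].
  unfold F in E1, E2. cbn beta iota zeta delta [sx1 sx2 su1 su2] in E1, E2.
  rewrite K1_0, aa_eq in E1. rewrite K2_0, aa_eq in E2.
  assert (G1s : r1 p * (1 - x1s / K01 p) - a0 p * x2s / (1 + h p * a0 p * x1s) = 0).
  { apply Rmult_integral in E1 as [E1|E1]; [lra|exact E1]. }
  assert (G2s : e p * a0 p * x1s / (1 + h p * a0 p * x1s) - d p + r2 p * (1 - x2s / K02 p) = 0).
  { apply Rmult_integral in E2 as [E2|E2]; [lra|exact E2]. }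
  clear E1 E2.
  assert (Hdr : 0 < 1 - d p / r2 p).
  { destruct (Rlt_dec 0 (1 - d p / r2 p)) as [|Hn]; auto. exfalso.
    apply Rnot_lt_le in Hn. assert (r1 p / (1 - d p / r2 p) <= 0).
    { destruct (Req_dec (1 - d p / r2 p) 0) as [Z|Z].
      - rewrite Z. unfold Rdiv. rewrite Rinv_0. lra.
      - unfold Rdiv. pose proof (Rinv_lt_0_compat (1 - d p / r2 p) ltac:(lra)). nra. }
    pose proof (Rmult_lt_0_compat _ _ HK02 Ha0). lra. }
  assert (Hx1K : x1s < K01 p).
  { assert (0 < a0 p * x2s / (1 + h p * a0 p * x1s)) by (apply Rdiv_lt_0_compat; nra).
    assert (x1s / K01 p < 1) by nra. unfold Rdiv in H0.
    apply Rmult_lt_reg_r with (/ K01 p); [apply Rinv_0_lt_compat; lra|]. rewrite Rinv_r; lra. }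
  set (S2 := sqrt (e p * K01 p * K02 p / (r1 p * r2 p))) in *.
  assert (HS1 : sqrt (r1 p * e p * K02 p / (r2 p * K01 p)) = S2 * (r1 p / K01 p)).
  { unfold S2. assert (0 <= r1 p / K01 p) by (apply Rlt_le, Rdiv_lt_0_compat; lra).
    rewrite <- (sqrt_square (r1 p / K01 p)) by auto.
    rewrite <- sqrt_mult_alt.
    2:{ apply Rlt_le, Rdiv_lt_0_compat; repeat apply Rmult_lt_0_compat; lra. }
    f_equal. field. lra. }
  rewrite HS1 in H5.
  assert (HS2 : 0 <= S2) by apply sqrt_pos.
  assert (Hsk1 : 0 < sK1 p * sK1 p) by nra.
  assert (Hratio : x2s / x1s < sa p ^ 2 * r1 p / (sK1 p ^ 2 * a0 p * K01 p)).
  { assert (S2 < sa p ^ 2 / (sK1 p * sK2 p) / a0 p).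
    { apply Rmult_lt_reg_r with (a0 p); auto.
      replace (sa p ^ 2 / (sK1 p * sK2 p) / a0 p * a0 p) with (sa p ^ 2 / (sK1 p * sK2 p)) by (field; lra). lra. }
    assert (0 < sK2 p / sK1 p * (r1 p / K01 p)) by (apply Rmult_lt_0_compat; apply Rdiv_lt_0_compat; lra).
    assert (sK2 p / sK1 p * S2 * (r1 p / K01 p) < sK2 p / sK1 p * (sa p ^ 2 / (sK1 p * sK2 p) / a0 p) * (r1 p / K01 p)).
    { replace (sK2 p / sK1 p * S2 * (r1 p / K01 p)) with (S2 * (sK2 p / sK1 p * (r1 p / K01 p))) by ring.
      replace (sK2 p / sK1 p * (sa p ^ 2 / (sK1 p * sK2 p) / a0 p) * (r1 p / K01 p)) with
        ((sa p ^ 2 / (sK1 p * sK2 p) / a0 p) * (sK2 p / sK1 p * (r1 p / K01 p))) by ring.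
      apply Rmult_lt_compat_r; auto. }
    replace (sa p ^ 2 * r1 p / (sK1 p ^ 2 * a0 p * K01 p)) with
      (sK2 p / sK1 p * (sa p ^ 2 / (sK1 p * sK2 p) / a0 p) * (r1 p / K01 p)) by (field; repeat split; lra).
    replace (sK2 p / sK1 p * (S2 * (r1 p / K01 p))) with (sK2 p / sK1 p * S2 * (r1 p / K01 p)) in H5 by ring.
    lra. }
  assert (Hkey : x2s * a0 p / sa p ^ 2 < r1 p * x1s / (sK1 p ^ 2 * K01 p)).
  { assert (Hsa2 : 0 < sa p ^ 2) by (apply pow_lt; lra).
    assert (0 < x1s * a0 p / sa p ^ 2) by (apply Rdiv_lt_0_compat; nra).
    apply (Rmult_lt_compat_r (x1s * a0 p / sa p ^ 2)) in Hratio; auto.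
    replace (x2s / x1s * (x1s * a0 p / sa p ^ 2)) with (x2s * a0 p / sa p ^ 2) in Hratio by (field; lra).
    replace (sa p ^ 2 * r1 p / (sK1 p ^ 2 * a0 p * K01 p) * (x1s * a0 p / sa p ^ 2)) with
      (r1 p * x1s / (sK1 p ^ 2 * K01 p)) in Hratio by (field; repeat split; try lra; apply pow_nonzero; lra).
    exact Hratio. }
  set (qs := / (1 + h p * a0 p * x1s)).
  assert (Hqs : 0 < qs) by (apply Rinv_0_lt_compat; lra).
  assert (Hqs1 : qs <= 1).
  { unfold qs. rewrite <- Rinv_1. apply Rinv_le_contravar; [lra|].
    pose proof (Rmult_lt_0_compat _ _ (Rmult_lt_0_compat _ _ Hh Ha0) Hx1). lra. }
  assert (HG1 : r1 p - r1 p * x1s * / K01 p - a0 p * x2s * / (1 + h p * a0 p * x1s) = 0).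
  { rewrite <- G1s. unfold Rdiv. ring. }
  assert (HG2 : e p * a0 p * x1s * / (1 + h p * a0 p * x1s) - d p + r2 p - r2 p * x2s * / K02 p = 0).
  { rewrite <- G2s. unfold Rdiv. ring. }
  assert (Hc : h p * a0 p * K01 p < 1).
  { pose proof H2 as H2'. apply (Rmult_lt_compat_l (h p)) in H2'; auto.
    replace (h p * (1 / h p)) with 1 in H2' by (field; lra).
    replace (h p * a0 p * K01 p) with (h p * (K01 p * a0 p)) by ring. exact H2'. }
  assert (HJ : - r1 p / K01 p + h p * a0 p ^ 2 * x2s * (/ (1 + h p * a0 p * x1s)) ^ 2 < 0).
  { fold qs. fold qs in HG1.
    assert (Hq : a0 p * x2s * qs = r1 p * (1 - x1s / K01 p)) by (unfold Rdiv; lra).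
    replace (h p * a0 p ^ 2 * x2s * qs ^ 2) with (h p * a0 p * qs * (a0 p * x2s * qs)) by ring.
    rewrite Hq.
    assert (Hlt : h p * a0 p * (K01 p - x1s) * qs < 1).
    { assert (h p * a0 p * (K01 p - x1s) < 1 + h p * a0 p * x1s) by nra.
      apply (Rmult_lt_compat_r qs) in H; auto. unfold qs in H at 2. rewrite Rinv_r in H by lra. lra. }
    replace (h p * a0 p * qs * (r1 p * (1 - x1s / K01 p))) with (r1 p / K01 p * (h p * a0 p * (K01 p - x1s) * qs)) by (field; lra).
    assert (0 < r1 p / K01 p) by (apply Rdiv_lt_0_compat; lra).
    assert (r1 p / K01 p * (h p * a0 p * (K01 p - x1s) * qs) < r1 p / K01 p * 1) by (apply Rmult_lt_compat_l; auto).
    lra. }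
  assert (HM : - (r1 p * x1s / (sK1 p ^ 2 * K01 p)) + x2s * a0 p * (/ (1 + h p * a0 p * x1s)) ^ 2 / sa p ^ 2 < 0).
  { fold qs. assert (qs ^ 2 <= 1) by nra.
    assert (0 < x2s * a0 p / sa p ^ 2) by (apply Rdiv_lt_0_compat; [nra|apply pow_lt; lra]).
    replace (x2s * a0 p * qs ^ 2 / sa p ^ 2) with (x2s * a0 p / sa p ^ 2 * qs ^ 2) by (field; lra).
    nra. }
  split.
  - unfold isESS. simpl. split; [lra|]. split; [lra|]. split; [exact Heq|]. split.
    { apply stable_ii; auto. }
    split.
    + intros _. unfold G1, G2. simpl. rewrite K1_0, K2_0, aa_eq.
      split; split.
      * intros v. rewrite G1s. apply G1_max; auto.
      * exact G1s.
      * intros v.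
        pose proof (aa_pos p 0 v Ha0). pose proof (aa_le p 0 v Ha0 Hsa).
        pose proof (mono_frac3 (h p) (aa p 0 v) x1s (a0 p) x1s Hh ltac:(lra) ltac:(lra) ltac:(lra) ltac:(lra)) as Hm.
        pose proof (K2_pos p v HK02). pose proof (K2_le p v HK02 HsK2).
        assert (/ K02 p <= / K2 p v) by (apply Rinv_le_contravar; lra).
        assert (x2s / K02 p <= x2s / K2 p v) by (unfold Rdiv; apply Rmult_le_compat_l; lra).
        replace (e p * aa p 0 v * x1s / (1 + h p * aa p 0 v * x1s)) with (e p * (aa p 0 v * x1s / (1 + h p * aa p 0 v * x1s))) by (unfold Rdiv; ring).
        replace (e p * a0 p * x1s / (1 + h p * a0 p * x1s)) with (e p * (a0 p * x1s / (1 + h p * a0 p * x1s))) by (unfold Rdiv; ring).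
        nra.
      * exact G2s.
    + intros H. nra.
  - intros [x1 x2 u1 u2] [Hx1' [Hx2' [Heq' [_ [Hint Hbd]]]]]. simpl in Hx1', Hx2', Hint, Hbd.
    destruct (eq_comps _ _ Heq') as [E1 [E2 [E3 E4]]].
    unfold F in E1, E2, E3, E4. cbn beta iota zeta delta [sx1 sx2 su1 su2] in E1, E2, E3, E4.
    destruct (Req_dec x1 0) as [Z1|N1].
    + exfalso. subst x1. destruct (Hbd ltac:(ring)) as [[_ G1le] _]. unfold G1 in G1le. simpl in G1le.
      destruct (Req_dec x2 0) as [Z2|N2].
      * subst x2. unfold Rdiv in G1le. rewrite !Rmult_0_l, Rmult_0_r in G1le. lra.
      * apply Rmult_integral in E2 as [E2|E2]; [lra|].
        pose proof (K2_pos p u2 HK02). pose proof (K2_le p u2 HK02 HsK2).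
        pose proof (aa_pos p u1 u2 Ha0). pose proof (aa_le p u1 u2 Ha0 Hsa).
        unfold Rdiv in E2 at 1. rewrite !Rmult_0_r, Rmult_0_l in E2.
        assert (X2 : x2 = K2 p u2 * (1 - d p / r2 p)).
        { assert (r2 p * (1 - x2 / K2 p u2) = d p) by lra.
          apply (Rmult_eq_reg_r (/ K2 p u2)); [|apply Rinv_neq_0_compat; lra].
          replace (K2 p u2 * (1 - d p / r2 p) * / K2 p u2) with (1 - d p / r2 p) by (field; lra).
          rewrite <- H7. field. split; lra. }
        assert (Hx2b : x2 <= K02 p * (1 - d p / r2 p)) by (rewrite X2; apply Rmult_le_compat_r; lra).
        assert (K02 p * a0 p * (1 - d p / r2 p) < r1 p).
        { apply (Rmult_lt_compat_r (1 - d p / r2 p)) in H1; auto.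
          set (t := 1 - d p / r2 p) in *. replace (r1 p / t * t) with (r1 p) in H1 by (field; lra). exact H1. }
        replace (aa p u1 u2 * x2 / (1 + h p * aa p u1 u2 * 0)) with (aa p u1 u2 * x2) in G1le by (replace (1 + h p * aa p u1 u2 * 0) with 1 by ring; field).
        unfold Rdiv in G1le. rewrite Rmult_0_l in G1le.
        assert (aa p u1 u2 * x2 <= a0 p * (K02 p * (1 - d p / r2 p))) by (apply Rmult_le_compat; lra).
        lra.
    + destruct (Req_dec x2 0) as [Z2|N2].
      * exfalso. subst x2. destruct (eq_x2zero p x1 u1 u2) as [-> [-> ->]]; auto; try lra.
        destruct (Hbd ltac:(ring)) as [_ [_ G2le]]. unfold G2 in G2le. simpl in G2le.
        rewrite aa_eq, K2_0 in G2le.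
        pose proof (mono_frac3_lt (h p) (a0 p) x1s (a0 p) (K01 p) Hh ltac:(lra) ltac:(lra) ltac:(lra) Hx1K Ha0) as Hm.
        assert (0 < x2s / K02 p) by (apply Rdiv_lt_0_compat; lra).
        unfold Rdiv in *. rewrite Rmult_0_l in G2le.
        replace (e p * a0 p * K01 p * / (1 + h p * a0 p * K01 p)) with (e p * (a0 p * K01 p * / (1 + h p * a0 p * K01 p))) in G2le by ring.
        replace (e p * a0 p * x1s * / (1 + h p * a0 p * x1s)) with (e p * (a0 p * x1s * / (1 + h p * a0 p * x1s))) in G2s by ring.
        nra.
      * assert (Hp : 0 < x1 /\ 0 < x2) by lra.
        destruct (Hint Hp) as [[G1max _] _]. clear Hint Hbd.
        pose proof (K1_pos p u1 HK01). pose proof (K2_pos p u2 HK02).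
        pose proof (aa_pos p u1 u2 Ha0).
        assert (Bp : 0 < 1 + h p * aa p u1 u2 * x1) by (pose proof (Rmult_lt_0_compat (h p * aa p u1 u2) x1 (Rmult_lt_0_compat _ _ Hh H3) ltac:(lra)); lra).
        assert (Hsa2 : 0 < sa p ^ 2 * (1 + h p * aa p u1 u2 * x1) ^ 2) by (apply Rmult_lt_0_compat; apply pow_lt; lra).
        set (al := r1 p * x1 / (sK1 p ^ 2 * K1 p u1)).
        set (be := x2 * aa p u1 u2 / (sa p ^ 2 * (1 + h p * aa p u1 u2 * x1) ^ 2)).
        set (ga := r2 p * x2 / (sK2 p ^ 2 * K2 p u2)).
        set (de := e p * x1 * aa p u1 u2 / (sa p ^ 2 * (1 + h p * aa p u1 u2 * x1) ^ 2)).
        assert (Hal : 0 < al) by (unfold al; apply Rdiv_lt_0_compat; [nra|apply Rmult_lt_0_compat; [apply pow_lt|]; lra]).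
        assert (Hbe : 0 < be) by (unfold be; apply Rdiv_lt_0_compat; nra).
        assert (Hga : 0 < ga) by (unfold ga; apply Rdiv_lt_0_compat; [nra|apply Rmult_lt_0_compat; [apply pow_lt|]; lra]).
        assert (Hde : 0 < de) by (unfold de; apply Rdiv_lt_0_compat; [apply Rmult_lt_0_compat; [apply Rmult_lt_0_compat|]|]; lra).
        assert (E3' : al * u1 = be * (u1 - u2)).
        { apply Rmult_integral in E3 as [E3|E3]; [pose proof (pow_lt _ 2 Hs1); lra|].
          unfold al, be. unfold Rdiv in *. lra. }
        assert (E4' : ga * u2 = de * (u1 - u2)).
        { apply Rmult_integral in E4 as [E4|E4]; [pose proof (pow_lt _ 2 Hs2); lra|].
          unfold ga, de. unfold Rdiv in *. lra. }
        assert (U : u1 = 0 /\ u2 = 0).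
        { destruct (Req_dec u1 u2) as [Q|Q].
          - subst u2. assert (Hz : al * u1 = 0) by lra. apply Rmult_integral in Hz as [Hz|Hz]; lra.
          - exfalso.
            assert (Hsq : 0 < (u1 - u2) * (u1 - u2)) by (pose proof (Rsqr_pos_lt (u1 - u2) ltac:(lra)) as Hs; unfold Rsqr in Hs; exact Hs).
            assert (X : ga * u2 * (u1 - u2) = de * ((u1 - u2) * (u1 - u2))) by (rewrite E4'; ring).
            assert (Hpos : 0 < u2 * (u1 - u2)).
            { destruct (Rlt_dec 0 (u2 * (u1 - u2))) as [|Hn]; auto. exfalso. apply Rnot_lt_le in Hn.
              assert (ga * (u2 * (u1 - u2)) <= 0) by nra. nra. }
            assert (Hv : (2 * u2 - u1) ^ 2 < u1 ^ 2) by nra.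
            pose proof (K1_lt p (2 * u2 - u1) u1 HK01 HsK1 Hv) as Hk.
            pose proof (K1_pos p (2 * u2 - u1) HK01).
            assert (Ha : aa p (2 * u2 - u1) u2 = aa p u1 u2).
            { unfold aa. replace ((2 * u2 - u1 - u2) ^ 2) with ((u1 - u2) ^ 2) by ring. reflexivity. }
            specialize (G1max (2 * u2 - u1)). unfold G1 in G1max. simpl in G1max. rewrite Ha in G1max.
            assert (/ K1 p (2 * u2 - u1) < / K1 p u1) by (apply Rinv_lt_contravar; nra).
            assert (x1 / K1 p (2 * u2 - u1) < x1 / K1 p u1) by (unfold Rdiv; apply Rmult_lt_compat_l; lra).
            nra. }
        destruct U as [-> ->].
        rewrite K1_0, aa_eq in E1. rewrite K2_0, aa_eq in E2.
        apply Rmult_integral in E1 as [E1|E1]; [lra|].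
        apply Rmult_integral in E2 as [E2|E2]; [lra|].
        destruct (Rtotal_order x1 x1s) as [Hlt1|[Eq1|Hgt1]].
        -- exfalso. apply (int_lt (r1 p) (K01 p) (a0 p) (h p) (e p) (d p) (r2 p) (K02 p) x1 x2 x1s x2s); auto; lra.
        -- rewrite Eq1 in E1, E2. assert (Hx22 : x2 = x2s).
           { assert (Hz : a0 p * x2 / (1 + h p * a0 p * x1s) = a0 p * x2s / (1 + h p * a0 p * x1s)) by lra.
             unfold Rdiv in Hz. apply Rmult_eq_reg_r in Hz; [|apply Rinv_neq_0_compat; lra].
             apply Rmult_eq_reg_l in Hz; lra. }
           rewrite Eq1, Hx22. reflexivity.
        -- exfalso. apply (int_lt (r1 p) (K01 p) (a0 p) (h p) (e p) (d p) (r2 p) (K02 p) x1s x2s x1 x2); auto; lra.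
Qed.

Theorem theorem7 (p : params)
  (HK01 : 0 < K01 p) (HK02 : 0 < K02 p) (HsK1 : 0 < sK1 p) (HsK2 : 0 < sK2 p)
  (Ha0 : 0 < a0 p) (Hsa : 0 < sa p)
  (Hr1 : 0 < r1 p) (Hr2 : 0 < r2 p) (Hh : 0 < h p) (He : 0 < e p)
  (Hs1 : 0 < s1 p) (Hs2 : 0 < s2 p) (Hd : 0 <= d p) :
  (* (i) *)
  (r2 p + e p * a0 p * K01 p / (1 + a0 p * h p * K01 p) < d p ->
     unique_ESS p (mkState (K01 p) 0 0 0)) /\
  (* (ii) *)
  (sK2 p > sK1 p ->
   forall x1s x2s : R, 0 < x1s -> 0 < x2s ->
     equilibrium p (mkState x1s x2s 0 0) ->
     K02 p * a0 p < r1 p / (1 - d p / r2 p) ->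
     K01 p * a0 p < 1 / h p ->
     Rmin (2 * r2 p / K02 p) (r1 p / (sK1 p ^ 2 * K01 p)) > a0 p ->
     r1 p * r2 p / (K01 p * K02 p) + e p * a0 p ^ 2 / (1 + a0 p * h p * K01 p) ^ 3
       > a0 p ^ 2 * h p * K02 p * (r2 p + e p / h p) ->
     sK2 p / sK1 p * sqrt (r1 p * e p * K02 p / (r2 p * K01 p)) > x2s / x1s ->
     sa p ^ 2 / (sK1 p * sK2 p) > sqrt (e p * K01 p * K02 p / (r1 p * r2 p)) * a0 p ->
     unique_ESS p (mkState x1s x2s 0 0)).
Proof.
  split.
  - intros Hi. apply part_i; auto.
  - apply part_ii; auto.
Qed.
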